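(* Consider the properties of a binary relation: (1) transitivity, (2) reflexivity, (3) symmetry, (4) antireflexivity ($x$ is never related to $x$), (5) antisymmetry. (A) For every pair $P,Q\subseteq\{1,2,3,4,5\}$, the class $\mathcal{K}_{P,Q}$ of structures $(X,R,S)$ where $R$ is a binary relation satisfying the properties in $P$ and $S$ is a binary relation coarser than $R$ (i.e. $R\subseteq S$) satisfying the properties in $Q$ has SAP; in fact superSAP holds simultaneously with respect to $R$ and $S$ (one amalgam witnesses both). The class of finite members of $\mathcal{K}_{P,Q}$ has a Fraïssé limit $\mathbf{M}$; $Th(\mathbf{M})$ is $\omega$-categorical, has quantifier elimination, and is the model completion of the first-order theory of $\mathcal{K}_{P,Q}$. (B) SuperSAP (simultaneously with respect to $R$ and $S$) is maintained if to $\mathcal{K}_{P,Q}$ we add families of (i) unary operations which are both $R$- and $S$-preserving; (ii) unary operations which are both $R$- and $S$-reversing; (iii) unary operations which are $R$-preserving; (iv) unary operations which are $R$-reversing. Fraïssé limits of the corresponding classes of finite structures still exist provided only finitely many operations are added. (C) The class of structures $(X,R,S,f)$ with $R$ a transitive binary relation, $S$ a binary relation coarser than $R$, and $f$ an $S$-preserving unary operation (not required to be $R$-preserving) does not have the amalgamation property. (D) The class of structures $(X,\le,S_1,f)$ with $\le$ a partial order, $S_1$ a symmetric reflexive relation coarser than $\le$, and $f$ an $S_1$-preserving unary operation does not have the amalgamation property.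
   Context: A unary operation $h$ is $T$-preserving for a binary relation $T$ if $x\,T\,y$ implies $h(x)\,T\,h(y)$, and $T$-reversing if $x\,T\,y$ implies $h(y)\,T\,h(x)$. All classes are closed under isomorphism. A triple to be amalgamated is $\mathbf{A},\mathbf{B},\mathbf{C}$ in the class with $\mathbf{C}\subseteq\mathbf{A}$, $\mathbf{C}\subseteq\mathbf{B}$, $C=A\cap B$. Amalgamation property (AP): for each such triple there are $\mathbf{D}$ in the class and embeddings of $\mathbf{A}$ and $\mathbf{B}$ into $\mathbf{D}$ agreeing on $C$. SAP: there is $\mathbf{D}$ in the class with $\mathbf{A},\mathbf{B}\subseteq\mathbf{D}$. SuperSAP with respect to a relation $R$: a $\mathbf{D}$ witnessing SAP such that for $a\in A\setminus B$, $b\in B\setminus A$, $a\,R_{\mathbf{D}}\,b$ implies $a\,R_{\mathbf{A}}\,c\,R_{\mathbf{B}}\,b$ for some $c\in C$, and $b\,R_{\mathbf{D}}\,a$ implies $b\,R_{\mathbf{B}}\,c\,R_{\mathbf{A}}\,a$ for some $c\in C$. A Fraïssé limit of a class of finitely generated structures in a countable language is a countable ultrahomogeneous structure with that age. A model completion of $T$ is a model complete theory with the same universal consequences as $T$, where $T$ has AP. *)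

(* Defs.v *)
From Stdlib Require Import List.
Import ListNotations.
Set Implicit Arguments.

Record Str (I : Type) : Type := mkStr {
  car :> Type;
  rR : car -> car -> Prop;
  rS : car -> car -> Prop;
  op : I -> car -> car }.
Arguments mkStr {I} car rR rS op.
Arguments rR {I} s _ _.
Arguments rS {I} s _ _.
Arguments op {I} s _ _.

Definition emb {I} {A B : Str I} (h : A -> B) : Prop :=
  (forall x y, h x = h y -> x = y) /\
  (forall x y, rR A x y <-> rR B (h x) (h y)) /\
  (forall x y, rS A x y <-> rS B (h x) (h y)) /\
  (forall i x, h (op A i x) = op B i (h x)).

Definition iso {I} {A B : Str I} (h : A -> B) : Prop :=
  emb h /\ forall y, exists x, h x = y.

(* A triple C <= A, C <= B is given by embeddings f : C -> A, g : C -> B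
   (classes are closed under isomorphism, so this is the paper's setting
   with C = A /\ B after renaming). *)
Definition AP {I} (K : Str I -> Prop) : Prop :=
  forall (A B C : Str I) (f : C -> A) (g : C -> B),
    K A -> K B -> K C -> emb f -> emb g ->
    exists (D : Str I) (i : A -> D) (j : B -> D),
      K D /\ emb i /\ emb j /\ (forall c, i (f c) = j (g c)).

Definition rel {I} (sel : bool) (N : Str I) : N -> N -> Prop :=
  if sel then rR N else rS N.

Definition not_in_img {C A : Type} (f : C -> A) (a : A) : Prop :=
  ~ exists c, f c = a.

Definition SAP {I} (K : Str I -> Prop) : Prop :=
  forall (A B C : Str I) (f : C -> A) (g : C -> B),
    K A -> K B -> K C -> emb f -> emb g ->
    exists (D : Str I) (i : A -> D) (j : B -> D),
      K D /\ emb i /\ emb j /\ (forall c, i (f c) = j (g c)) /\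
      (forall a b, i a = j b -> exists c, f c = a /\ g c = b).

(* superSAP simultaneously with respect to R (sel = true) and S (sel = false):
   one strong amalgam D witnessing the superSAP condition for both. *)
Definition superSAP_RS {I} (K : Str I -> Prop) : Prop :=
  forall (A B C : Str I) (f : C -> A) (g : C -> B),
    K A -> K B -> K C -> emb f -> emb g ->
    exists (D : Str I) (i : A -> D) (j : B -> D),
      K D /\ emb i /\ emb j /\ (forall c, i (f c) = j (g c)) /\
      (forall a b, i a = j b -> exists c, f c = a /\ g c = b) /\
      (forall (sel : bool) (a : A) (b : B), not_in_img f a -> not_in_img g b ->
        (rel sel D (i a) (j b) -> exists c, rel sel A a (f c) /\ rel sel B (g c) b) /\
        (rel sel D (j b) (i a) -> exists c, rel sel B b (g c) /\ rel sel A (f c) a)).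

Definition finite_type (T : Type) : Prop := exists l : list T, forall x, In x l.
Definition countable (T : Type) : Prop :=
  exists f : T -> nat, forall x y, f x = f y -> x = y.
Definition infinite (T : Type) : Prop := forall l : list T, exists x, ~ In x l.

Definition finite_mem {I} (K : Str I -> Prop) (N : Str I) : Prop :=
  K N /\ finite_type N.

Record substr {I} (M : Str I) := {
  sp : M -> Prop;
  sp_closed : forall i x, sp x -> sp (op M i x) }.
Arguments sp {I M} s _.
Arguments sp_closed {I M} s _ _ _.

Definition induced {I} {M : Str I} (X : substr M) : Str I :=
  mkStr {x : M | sp X x}
    (fun x y => rR M (proj1_sig x) (proj1_sig y))
    (fun x y => rS M (proj1_sig x) (proj1_sig y))
    (fun i x => exist _ (op M i (proj1_sig x)) (sp_closed X i _ (proj2_sig x))).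

Inductive gen {I} (M : Str I) (l : list M) : M -> Prop :=
| gen_base : forall x, In x l -> gen M l x
| gen_op : forall i x, gen M l x -> gen M l (op M i x).

Definition fin_gen {I} {M : Str I} (X : substr M) : Prop :=
  exists l : list M, forall x, sp X x <-> gen M l x.

Definition age_is {I} (M : Str I) (K : Str I -> Prop) : Prop :=
  forall N : Str I, K N <->
    exists X : substr M, fin_gen X /\ exists h : N -> induced X, iso h.

Definition ultrahomogeneous {I} (M : Str I) : Prop :=
  forall (X Y : substr M), fin_gen X -> fin_gen Y ->
  forall h : induced X -> induced Y, iso h ->
  exists s : M -> M, iso s /\ forall x, s (proj1_sig x) = proj1_sig (h x).

Definition Fraisse_limit {I} (K : Str I -> Prop) (M : Str I) : Prop :=
  countable M /\ ultrahomogeneous M /\ age_is M K.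

(* (structures without operations: Str Empty_set); de Bruijn variables *)
Inductive fm : Type :=
| fR : nat -> nat -> fm
| fS : nat -> nat -> fm
| fEq : nat -> nat -> fm
| fBot : fm
| fImp : fm -> fm -> fm
| fAll : fm -> fm.

Definition RSStr := Str Empty_set.

Definition scons {T} (x : T) (e : nat -> T) (n : nat) : T :=
  match n with 0 => x | S m => e m end.

Fixpoint sat (N : RSStr) (e : nat -> N) (p : fm) : Prop :=
  match p with
  | fR i j => rR N (e i) (e j)
  | fS i j => rS N (e i) (e j)
  | fEq i j => e i = e j
  | fBot => False
  | fImp a b => sat N e a -> sat N e b
  | fAll a => forall x : N, sat N (scons x e) a
  end.

(* all free variables are < n *)
Fixpoint bound (n : nat) (p : fm) : Prop :=
  match p with
  | fR i j | fS i j | fEq i j => i < n /\ j < n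
  | fBot => True
  | fImp a b => bound n a /\ bound n b
  | fAll a => bound (S n) a
  end.

Definition sentence (p : fm) : Prop := bound 0 p.

Fixpoint qf (p : fm) : Prop :=
  match p with
  | fAll _ => False
  | fImp a b => qf a /\ qf b
  | _ => True
  end.

Definition universal (p : fm) : Prop :=
  exists k psi, qf psi /\ p = Nat.iter k fAll psi.

Definition theory := fm -> Prop.

Definition holds (N : RSStr) (p : fm) : Prop := forall e, sat N e p.

Definition Th (N : RSStr) : theory := fun p => sentence p /\ holds N p.

Definition ThK (K : RSStr -> Prop) : theory :=
  fun p => sentence p /\ forall N, K N -> inhabited N -> holds N p.

Definition model (T : theory) (N : RSStr) : Prop :=
  inhabited N /\ forall p, T p -> holds N p.

Definition entails (T : theory) (p : fm) : Prop :=
  forall N, model T N -> holds N p.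

Definition elementary {N N' : RSStr} (h : N -> N') : Prop :=
  forall p e, sat N e p <-> sat N' (fun n => h (e n)) p.

Definition model_complete (T : theory) : Prop :=
  forall (N N' : RSStr) (h : N -> N'),
    model T N -> model T N' -> emb h -> elementary h.

Definition model_completion (T' T : theory) : Prop :=
  model_complete T' /\
  (forall p, sentence p -> universal p -> (entails T p <-> entails T' p)) /\
  AP (model T).

Definition QE (T : theory) : Prop :=
  forall n p, bound n p ->
    exists psi, qf psi /\ bound n psi /\
      forall N, model T N -> forall e, sat N e p <-> sat N e psi.

Definition omega_categorical (T : theory) : Prop :=
  forall N N' : RSStr, model T N -> model T N' ->
    countable N -> infinite N -> countable N' -> infinite N' ->
    exists h : N -> N', iso h.

(* 1 transitivity, 2 reflexivity, 3 symmetry, 4 antireflexivity, 5 antisymmetry *)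
Inductive rprop := Trans | Refl | Symm | Irrefl | Antisym.

Definition has_prop {T : Type} (p : rprop) (r : T -> T -> Prop) : Prop :=
  match p with
  | Trans => forall x y z, r x y -> r y z -> r x z
  | Refl => forall x, r x x
  | Symm => forall x y, r x y -> r y x
  | Irrefl => forall x, ~ r x x
  | Antisym => forall x y, r x y -> r y x -> x = y
  end.

Definition RS_conds {I} (P Q : rprop -> Prop) (N : Str I) : Prop :=
  (forall p, P p -> has_prop p (rR N)) /\
  (forall q, Q q -> has_prop q (rS N)) /\
  (forall x y, rR N x y -> rS N x y).

Definition KPQ (P Q : rprop -> Prop) : RSStr -> Prop := RS_conds P Q.

Definition preserving {T : Type} (r : T -> T -> Prop) (h : T -> T) : Prop :=
  forall x y, r x y -> r (h x) (h y).
Definition reversing {T : Type} (r : T -> T -> Prop) (h : T -> T) : Prop :=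
  forall x y, r x y -> r (h y) (h x).

(* K_{P,Q} expanded by families of operations of kinds (i),(ii),(iii),(iv)
   indexed by I1, I2, I3, I4 respectively *)
Definition KPQ_ops (P Q : rprop -> Prop) (I1 I2 I3 I4 : Type)
    (N : Str (I1 + I2 + I3 + I4)) : Prop :=
  RS_conds P Q N /\
  (forall i, preserving (rR N) (op N (inl (inl (inl i)))) /\
             preserving (rS N) (op N (inl (inl (inl i))))) /\
  (forall i, reversing (rR N) (op N (inl (inl (inr i)))) /\
             reversing (rS N) (op N (inl (inl (inr i))))) /\
  (forall i, preserving (rR N) (op N (inl (inr i)))) /\
  (forall i, reversing (rR N) (op N (inr i))).

Definition KC (N : Str unit) : Prop :=
  has_prop Trans (rR N) /\ (forall x y, rR N x y -> rS N x y) /\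
  preserving (rS N) (op N tt).

(* (D): R = <= a partial order, S = S_1 symmetric reflexive, <= included in S_1,
   f S_1-preserving *)
Definition KD (N : Str unit) : Prop :=
  has_prop Refl (rR N) /\ has_prop Trans (rR N) /\ has_prop Antisym (rR N) /\
  has_prop Symm (rS N) /\ has_prop Refl (rS N) /\
  (forall x y, rR N x y -> rS N x y) /\
  preserving (rS N) (op N tt).
Arguments KPQ_ops P Q I1 I2 I3 I4 N : clear implicits.

(* Main.v *)
Require Import Defs.
From Stdlib Require Import List Bool Arith Lia Classical ClassicalEpsilon FunctionalExtensionality ProofIrrelevance Cantor.
Import ListNotations.

Module XCD.

Inductive C3 := c0 | d1 | d2.

Definition Sb3 (x y : C3) : bool :=
  match x, y with
  | c0, c0 | d1, d1 | d2, d2 | c0, d1 | d1, c0 | c0, d2 | d2, c0 => true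
  | _, _ => false end.
Definition eqb3 (x y : C3) : bool :=
  match x, y with c0, c0 | d1, d1 | d2, d2 => true | _, _ => false end.

Definition cC : Str unit := mkStr C3 (fun x y => eqb3 x y = true) (fun x y => Sb3 x y = true) (fun _ x => x).

Definition RAb (x y : option C3) : bool :=
  match x, y with
  | None, None => true | None, Some c0 => true
  | Some a, Some b => eqb3 a b | _, _ => false end.
Definition RBb (x y : option C3) : bool := RAb y x.
Definition SOb (x y : option C3) : bool :=
  match x, y with
  | None, None => true | None, Some c0 => true | Some c0, None => true
  | Some a, Some b => Sb3 a b | _, _ => false end.

Definition cA : Str unit := mkStr (option C3) (fun x y => RAb x y = true) (fun x y => SOb x y = true)
  (fun _ x => match x with None => Some d1 | Some y => Some y end).
Definition cB : Str unit := mkStr (option C3) (fun x y => RBb x y = true) (fun x y => SOb x y = true)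
  (fun _ x => match x with None => Some d2 | Some y => Some y end).

Ltac brute := repeat match goal with
  | x : C3 |- _ => destruct x
  | x : option C3 |- _ => destruct x
  | x : unit |- _ => destruct x
  end; simpl in *; try discriminate; try reflexivity; try tauto.

Lemma KD_C : KD cC.
Proof. unfold KD, preserving; simpl; repeat split; intros; brute. Qed.
Lemma KD_A : KD cA.
Proof. unfold KD, preserving; simpl; repeat split; intros; brute. Qed.
Lemma KD_B : KD cB.
Proof. unfold KD, preserving; simpl; repeat split; intros; brute. Qed.
Lemma KD_KC N : KD N -> KC N.
Proof. unfold KD, KC; simpl; tauto. Qed.

Lemma emb_fA : @emb unit cC cA Some.
Proof. unfold emb; simpl; repeat split; intros; try injection H; intros; brute. Qed.
Lemma emb_fB : @emb unit cC cB Some.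
Proof. unfold emb; simpl; repeat split; intros; try injection H; intros; brute. Qed.

Lemma noAP (K : Str unit -> Prop) :
  (forall N, K N -> has_prop Trans (rR N) /\ (forall x y, rR N x y -> rS N x y) /\ preserving (rS N) (op N tt)) ->
  K cA -> K cB -> K cC -> ~ AP K.
Proof.
  intros HK hA hB hC ap.
  destruct (ap cA cB cC Some Some hA hB hC emb_fA emb_fB) as (D & i & j & KDD & Ei & Ej & Hc).
  destruct (HK D KDD) as (Tr & Inc & Pr).
  destruct Ei as (_ & RiA & SiA & Oi). destruct Ej as (_ & RjA & SjA & Oj).
  assert (H1 : rR D (i None) (j None)).
  { apply (Tr _ (i (Some c0))). apply RiA; reflexivity. pose proof (Hc c0) as E; simpl in E |- *; rewrite E. apply RjA; reflexivity. }
  apply Inc, Pr in H1.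
  rewrite <- (Oi tt None), <- (Oj tt None) in H1. simpl in H1.
  pose proof (Hc d2) as E; simpl in E, H1; rewrite <- E in H1. apply SiA in H1. simpl in H1. discriminate.
Qed.

Lemma partC : ~ AP KC.
Proof. apply noAP. intros N H; exact H. apply KD_KC, KD_A. apply KD_KC, KD_B. apply KD_KC, KD_C. Qed.
Lemma partD : ~ AP KD.
Proof. apply noAP. intros N H; apply KD_KC in H; exact H. apply KD_A. apply KD_B. apply KD_C. Qed.

End XCD.
Import XCD.

Module XAmal.

Inductive okind := kPP | kRR | kP | kRv.

Definition okR (k : okind) {T} (r : T -> T -> Prop) (h : T -> T) : Prop :=
  match k with kPP | kP => preserving r h | kRR | kRv => reversing r h end.
Definition okS (k : okind) {T} (r : T -> T -> Prop) (h : T -> T) : Prop :=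
  match k with kPP => preserving r h | kRR => reversing r h | _ => True end.

Definition KG {I} (P Q : rprop -> Prop) (kd : I -> okind) (N : Str I) : Prop :=
  RS_conds P Q N /\ forall i, okR (kd i) (rR N) (op N i) /\ okS (kd i) (rS N) (op N i).

Section Amalg.
Context {I : Type} (A B C : Str I) (f : C -> A) (g : C -> B).
Hypothesis finj : forall x y, f x = f y -> x = y.
Hypothesis ginj : forall x y, g x = g y -> x = y.
Hypothesis fop : forall i x, f (op C i x) = op A i (f x).
Hypothesis gop : forall i x, g (op C i x) = op B i (g x).

Definition Dc : Type := (A + {b : B | not_in_img g b})%type.

Definition inA (x : Dc) (a : A) : Prop :=
  match x with inl a' => a' = a | inr _ => False end.
Definition inB (x : Dc) (b : B) : Prop :=
  match x with inl a => exists c, f c = a /\ g c = b | inr b' => proj1_sig b' = b end.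

Definition jm (b : B) : Dc :=
  match excluded_middle_informative (exists c, g c = b) with
  | left H => inl (f (proj1_sig (constructive_indefinite_description _ H)))
  | right H => inr (exist _ b H) end.

Lemma inB_jm b : inB (jm b) b.
Proof.
  unfold jm. destruct excluded_middle_informative as [H|H]; simpl; auto.
  destruct constructive_indefinite_description as [c Hc]; simpl. eauto.
Qed.

Lemma inA_uniq x a a' : inA x a -> inA x a' -> a = a'.
Proof. destruct x; simpl; intros; subst; auto; contradiction. Qed.
Lemma inB_uniq x b b' : inB x b -> inB x b' -> b = b'.
Proof.
  destruct x as [a|b0]; simpl.
  - intros (c & <- & <-) (c' & E & <-). apply finj in E. subst; auto.
  - intros; subst; auto.
Qed.
Lemma inA_inj x y a : inA x a -> inA y a -> x = y.
Proof. destruct x, y; simpl; intros; subst; try contradiction; auto. Qed.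
Lemma inB_inj x y b : inB x b -> inB y b -> x = y.
Proof.
  destruct x as [a|[b0 H0]], y as [a'|[b1 H1]]; simpl.
  - intros (c & <- & <-) (c' & <- & E). apply ginj in E; subst; auto.
  - intros (c & <- & <-) E. subst. exfalso. apply H1. eauto.
  - intros E (c & <- & <-). subst. exfalso. apply H0. eauto.
  - intros <- <-. f_equal. f_equal. apply proof_irrelevance.
Qed.
Lemma inAB x a b : inA x a -> inB x b -> exists c, f c = a /\ g c = b.
Proof. destruct x; simpl; intros; subst; auto; contradiction. Qed.
Lemma cover x : (exists a, inA x a) \/ (exists b, inB x b).
Proof. destruct x as [a|[b H]]; simpl; eauto. Qed.
Lemma inA_fB c : inB (inl (f c)) (g c).
Proof. simpl; eauto. Qed.

Section E.
Variables (rA : A -> A -> Prop) (rB : B -> B -> Prop) (rC : C -> C -> Prop).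
Hypothesis agA : forall c c', rC c c' <-> rA (f c) (f c').
Hypothesis agB : forall c c', rC c c' <-> rB (g c) (g c').

Definition E0 (x y : Dc) : Prop :=
  (exists a a', inA x a /\ inA y a' /\ rA a a') \/
  (exists b b', inB x b /\ inB y b' /\ rB b b').

Definition SS (x y : Dc) : Prop :=
  (exists a a', inA x a /\ inA y a') \/ (exists b b', inB x b /\ inB y b').

Lemma E0_SS x y : E0 x y -> SS x y.
Proof. intros [(a&a'&H1&H2&_)|(b&b'&H1&H2&_)]; [left|right]; eauto. Qed.

Lemma E0_A x y a a' : E0 x y -> inA x a -> inA y a' -> rA a a'.
Proof.
  intros [(a1&a1'&H1&H2&H3)|(b&b'&H1&H2&H3)] Ha Ha'.
  - rewrite (inA_uniq _ _ _ Ha H1), (inA_uniq _ _ _ Ha' H2); auto.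
  - destruct (inAB _ _ _ Ha H1) as (c & <- & <-).
    destruct (inAB _ _ _ Ha' H2) as (c' & <- & <-). apply agA, agB; auto.
Qed.
Lemma E0_B x y b b' : E0 x y -> inB x b -> inB y b' -> rB b b'.
Proof.
  intros [(a1&a1'&H1&H2&H3)|(b1&b1'&H1&H2&H3)] Hb Hb'.
  - destruct (inAB _ _ _ H1 Hb) as (c & <- & <-).
    destruct (inAB _ _ _ H2 Hb') as (c' & <- & <-). apply agB, agA; auto.
  - rewrite (inB_uniq _ _ _ Hb H1), (inB_uniq _ _ _ Hb' H2); auto.
Qed.

Section Tr.
Hypothesis trA : forall x y z, rA x y -> rA y z -> rA x z.
Hypothesis trB : forall x y z, rB x y -> rB y z -> rB x z.

Lemma E00_A x z y a a' : E0 x z -> E0 z y -> inA x a -> inA y a' -> rA a a'.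
Proof.
  intros H1 H2 Ha Ha'.
  destruct (cover z) as [(a''&Hz)|(b''&Hz)].
  - apply trA with a''; [exact (E0_A _ _ _ _ H1 Ha Hz) | exact (E0_A _ _ _ _ H2 Hz Ha')].
  - destruct (E0_SS _ _ H1) as [(a1&a2&_&Hz')|(b1&b2&Hx&_)].
    + apply trA with a2; [exact (E0_A _ _ _ _ H1 Ha Hz') | exact (E0_A _ _ _ _ H2 Hz' Ha')].
    + destruct (E0_SS _ _ H2) as [(a3&a4&Hz'&_)|(b3&b4&_&Hy)].
      * apply trA with a3; [exact (E0_A _ _ _ _ H1 Ha Hz') | exact (E0_A _ _ _ _ H2 Hz' Ha')].
      * destruct (inAB _ _ _ Ha Hx) as (c & <- & <-).
        destruct (inAB _ _ _ Ha' Hy) as (c' & <- & <-).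
        apply agA, agB. apply trB with b''; [exact (E0_B _ _ _ _ H1 Hx Hz) | exact (E0_B _ _ _ _ H2 Hz Hy)].
Qed.
Lemma E00_B x z y b b' : E0 x z -> E0 z y -> inB x b -> inB y b' -> rB b b'.
Proof.
  intros H1 H2 Hb Hb'.
  destruct (cover z) as [(a''&Hz)|(b''&Hz)].
  - destruct (E0_SS _ _ H1) as [(a1&a2&Hx&_)|(b1&b2&_&Hz')].
    + destruct (E0_SS _ _ H2) as [(a3&a4&_&Hy)|(b3&b4&Hz'&_)].
      * destruct (inAB _ _ _ Hx Hb) as (c & <- & <-).
        destruct (inAB _ _ _ Hy Hb') as (c' & <- & <-).
        apply agB, agA. apply trA with a''; [exact (E0_A _ _ _ _ H1 Hx Hz) | exact (E0_A _ _ _ _ H2 Hz Hy)].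
      * apply trB with b3; [exact (E0_B _ _ _ _ H1 Hb Hz') | exact (E0_B _ _ _ _ H2 Hz' Hb')].
    + apply trB with b2; [exact (E0_B _ _ _ _ H1 Hb Hz') | exact (E0_B _ _ _ _ H2 Hz' Hb')].
  - apply trB with b''; [exact (E0_B _ _ _ _ H1 Hb Hz) | exact (E0_B _ _ _ _ H2 Hz Hb')].
Qed.

Lemma collapse x z y : E0 x z -> E0 z y -> SS x y -> E0 x y.
Proof.
  intros H1 H2 [(a&a'&Ha&Ha')|(b&b'&Hb&Hb')].
  - left. exists a, a'. split; [exact Ha|split; [exact Ha'|]]. exact (E00_A _ _ _ _ _ H1 H2 Ha Ha').
  - right. exists b, b'. split; [exact Hb|split; [exact Hb'|]]. exact (E00_B _ _ _ _ _ H1 H2 Hb Hb').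
Qed.

Lemma path3 x y z w : E0 x y -> E0 y z -> E0 z w -> SS x z \/ SS y w.
Proof.
  intros H1 H2 H3.
  destruct (E0_SS _ _ H1) as [(a1&a2&X1&Y1)|(b1&b2&X1&Y1)];
  destruct (E0_SS _ _ H2) as [(a3&a4&X2&Y2)|(b3&b4&X2&Y2)];
  destruct (E0_SS _ _ H3) as [(a5&a6&X3&Y3)|(b5&b6&X3&Y3)];
  try (left; left; eauto; fail); try (left; right; eauto; fail);
  try (right; left; eauto; fail); try (right; right; eauto; fail).
Qed.
End Tr.

Definition ED (T : Prop) (x y : Dc) : Prop :=
  E0 x y \/ (T /\ exists z, E0 x z /\ E0 z y).

Section Tr2.
Variable T : Prop.
Hypothesis HT : T -> (forall x y z, rA x y -> rA y z -> rA x z) /\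
                     (forall x y z, rB x y -> rB y z -> rB x z).

Lemma ED_A x y a a' : ED T x y -> inA x a -> inA y a' -> rA a a'.
Proof.
  intros [H|(t&z&H1&H2)] Ha Ha'. exact (E0_A _ _ _ _ H Ha Ha').
  destruct (HT t) as [tA tB]. exact (E00_A tA tB _ _ _ _ _ H1 H2 Ha Ha').
Qed.
Lemma ED_B x y b b' : ED T x y -> inB x b -> inB y b' -> rB b b'.
Proof.
  intros [H|(t&z&H1&H2)] Hb Hb'. exact (E0_B _ _ _ _ H Hb Hb').
  destruct (HT t) as [tA tB]. exact (E00_B tA tB _ _ _ _ _ H1 H2 Hb Hb').
Qed.

Lemma ED3 x y z w : T -> E0 x y -> E0 y z -> E0 z w -> ED T x w.
Proof.
  intros t H1 H2 H3. destruct (HT t) as [tA tB].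
  destruct (path3 _ _ _ _ H1 H2 H3) as [S|S].
  - right. split; auto. exists z. split; auto. exact (collapse tA tB _ _ _ H1 H2 S).
  - right. split; auto. exists y. split; auto. exact (collapse tA tB _ _ _ H2 H3 S).
Qed.

Lemma ED_trans x y z : T -> ED T x y -> ED T y z -> ED T x z.
Proof.
  intros t [H1|(_&u&H1&H1')] [H2|(_&v&H2&H2')].
  - right; eauto.
  - exact (ED3 _ _ _ _ t H1 H2 H2').
  - exact (ED3 _ _ _ _ t H1 H1' H2).
  - destruct (ED3 _ _ _ _ t H1 H1' H2) as [K|(_&w&K1&K2)].
    + right; split; auto; exists v; auto.
    + exact (ED3 _ _ _ _ t K1 K2 H2').
Qed.
End Tr2.

Lemma ED_inA T a a' : rA a a' -> ED T (inl a) (inl a').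
Proof. intros; left; left; exists a, a'; simpl; auto. Qed.
Lemma ED_inB T b b' : rB b b' -> ED T (jm b) (jm b').
Proof. intros; left; right; exists b, b'; repeat split; auto; apply inB_jm. Qed.

Lemma E0_mono (rA' : A -> A -> Prop) (rB' : B -> B -> Prop) x y :
  (forall a a', rA a a' -> rA' a a') -> (forall b b', rB b b' -> rB' b b') ->
  E0 x y -> (exists a a', inA x a /\ inA y a' /\ rA' a a') \/
  (exists b b', inB x b /\ inB y b' /\ rB' b b').
Proof.
  intros HA HB [(a&a'&H1&H2&H3)|(b&b'&H1&H2&H3)]; [left|right]; eauto 7.
Qed.

Lemma ED_cross T a b (Hb : not_in_img g b) :
  not_in_img f a -> ED T (inl a) (inr (exist _ b Hb)) ->
  T /\ exists c, rA a (f c) /\ rB (g c) b.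
Proof.
  intros Ha [H|(t&z&H1&H2)].
  - exfalso. destruct (E0_SS _ _ H) as [(a1&a2&_&X)|(b1&b2&X&_)]; simpl in X; auto.
    destruct X as (c&E&_). apply Ha; eauto.
  - split; auto.
    destruct (E0_SS _ _ H1) as [(a1&a2&X1&Y1)|(b1&b2&X1&Y1)].
    2:{ exfalso; simpl in X1. destruct X1 as (c&E&_). apply Ha; eauto. }
    destruct (E0_SS _ _ H2) as [(a3&a4&X2&Y2)|(b3&b4&X2&Y2)].
    { simpl in Y2; contradiction. }
    destruct (inAB _ _ _ Y1 X2) as (c&E1&E2). subst. exists c. split.
    + exact (E0_A _ _ _ _ H1 (eq_refl a) Y1).
    + exact (E0_B _ _ _ _ H2 X2 (eq_refl b)).
Qed.
Lemma ED_cross' T a b (Hb : not_in_img g b) :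
  not_in_img f a -> ED T (inr (exist _ b Hb)) (inl a) ->
  T /\ exists c, rB b (g c) /\ rA (f c) a.
Proof.
  intros Ha [H|(t&z&H1&H2)].
  - exfalso. destruct (E0_SS _ _ H) as [(a1&a2&X&_)|(b1&b2&_&X)]; simpl in X; auto.
    destruct X as (c&E&_). apply Ha; eauto.
  - split; auto.
    destruct (E0_SS _ _ H1) as [(a1&a2&X1&Y1)|(b1&b2&X1&Y1)].
    { simpl in X1; contradiction. }
    destruct (E0_SS _ _ H2) as [(a3&a4&X2&Y2)|(b3&b4&X2&Y2)].
    2:{ exfalso; simpl in Y2. destruct Y2 as (c&E&_). apply Ha; eauto. }
    destruct (inAB _ _ _ X2 Y1) as (c&E1&E2). subst. exists c. split.
    + exact (E0_B _ _ _ _ H1 (eq_refl b) Y1).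
    + exact (E0_A _ _ _ _ H2 X2 (eq_refl a)).
Qed.

End E.

Definition opD (k : I) (x : Dc) : Dc :=
  match x with inl a => inl (op A k a) | inr b => jm (op B k (proj1_sig b)) end.

Lemma opD_A k x a : inA x a -> inA (opD k x) (op A k a).
Proof. destruct x; simpl; intros; subst; auto; contradiction. Qed.
Lemma opD_B k x b : inB x b -> inB (opD k x) (op B k b).
Proof.
  destruct x as [a|[b0 H0]]; simpl.
  - intros (c & <- & <-). exists (op C k c). rewrite fop, gop; auto.
  - intros <-. apply inB_jm.
Qed.

Section Ops.
Variables (rA : A -> A -> Prop) (rB : B -> B -> Prop).
Variable k : I.
Lemma E0_pres : preserving rA (op A k) -> preserving rB (op B k) ->
  forall x y, E0 rA rB x y -> E0 rA rB (opD k x) (opD k y).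
Proof.
  intros pA pB x y [(a&a'&H1&H2&H3)|(b&b'&H1&H2&H3)].
  - left. exists (op A k a), (op A k a'). repeat split; auto using opD_A.
  - right. exists (op B k b), (op B k b'). repeat split; auto using opD_B.
Qed.
Lemma E0_rev : reversing rA (op A k) -> reversing rB (op B k) ->
  forall x y, E0 rA rB x y -> E0 rA rB (opD k y) (opD k x).
Proof.
  intros pA pB x y [(a&a'&H1&H2&H3)|(b&b'&H1&H2&H3)].
  - left. exists (op A k a'), (op A k a). repeat split; auto using opD_A.
  - right. exists (op B k b'), (op B k b). repeat split; auto using opD_B.
Qed.
Lemma ED_pres T : preserving rA (op A k) -> preserving rB (op B k) ->
  preserving (ED rA rB T) (opD k).
Proof.
  intros pA pB x y [H|(t&z&H1&H2)].
  - left; apply E0_pres; auto.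
  - right; split; auto; exists (opD k z); split; apply E0_pres; auto.
Qed.
Lemma ED_rev T : reversing rA (op A k) -> reversing rB (op B k) ->
  reversing (ED rA rB T) (opD k).
Proof.
  intros pA pB x y [H|(t&z&H1&H2)].
  - left; apply E0_rev; auto.
  - right; split; auto; exists (opD k z); split; apply E0_rev; auto.
Qed.
End Ops.

Lemma E0_of_A (rA : A -> A -> Prop) rB x y a a' : inA x a -> inA y a' -> rA a a' -> E0 rA rB x y.
Proof. intros; left; eauto. Qed.
Lemma E0_of_B (rA : A -> A -> Prop) rB x y b b' : inB x b -> inB y b' -> rB b b' -> E0 rA rB x y.
Proof. intros; right; eauto. Qed.


Section Main.
Variables (P Q : rprop -> Prop) (kd : I -> okind).
Hypothesis KA : KG P Q kd A.
Hypothesis KB : KG P Q kd B.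
Hypothesis agRA : forall c c', rR C c c' <-> rR A (f c) (f c').
Hypothesis agRB : forall c c', rR C c c' <-> rR B (g c) (g c').
Hypothesis agSA : forall c c', rS C c c' <-> rS A (f c) (f c').
Hypothesis agSB : forall c c', rS C c c' <-> rS B (g c) (g c').

Lemma HTR : P Trans -> (forall x y z, rR A x y -> rR A y z -> rR A x z) /\
                       (forall x y z, rR B x y -> rR B y z -> rR B x z).
Proof. intros t. destruct KA as ((pA&_&_)&_), KB as ((pB&_&_)&_). split; [exact (pA _ t)|exact (pB _ t)]. Qed.
Lemma HTS : Q Trans -> (forall x y z, rS A x y -> rS A y z -> rS A x z) /\
                       (forall x y z, rS B x y -> rS B y z -> rS B x z).
Proof. intros t. destruct KA as ((_&pA&_)&_), KB as ((_&pB&_)&_). split; [exact (pA _ t)|exact (pB _ t)]. Qed.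

Definition RD := ED (rR A) (rR B) (P Trans).
Definition ES := ED (rS A) (rS B) (Q Trans).
Definition SD x y := ES x y \/ RD x y \/ (Q Symm /\ RD y x).

Lemma incA x y : rR A x y -> rS A x y.
Proof. destruct KA as ((_&_&h)&_); auto. Qed.
Lemma incB x y : rR B x y -> rS B x y.
Proof. destruct KB as ((_&_&h)&_); auto. Qed.
Lemma propA p : P p -> has_prop p (rR A). Proof. destruct KA as ((h&_)&_); auto. Qed.
Lemma propB p : P p -> has_prop p (rR B). Proof. destruct KB as ((h&_)&_); auto. Qed.
Lemma qpropA p : Q p -> has_prop p (rS A). Proof. destruct KA as ((_&h&_)&_); auto. Qed.
Lemma qpropB p : Q p -> has_prop p (rS B). Proof. destruct KB as ((_&h&_)&_); auto. Qed.

Ltac viaA lem := match goal with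
 | H : _ ?x ?y, Ha : inA ?x ?a, Hb : inA ?y ?b |- _ => exact (lem x y a b H Ha Hb)
 | H : _ ?x ?x, Ha : inA ?x ?a |- _ => exact (lem x x a a H Ha Ha) end.
Ltac viaB lem := match goal with
 | H : _ ?x ?y, Ha : inB ?x ?a, Hb : inB ?y ?b |- _ => exact (lem x y a b H Ha Hb)
 | H : _ ?x ?x, Ha : inB ?x ?a |- _ => exact (lem x x a a H Ha Ha) end.

Lemma RD_A x y a a' : RD x y -> inA x a -> inA y a' -> rR A a a'.
Proof. exact (ED_A (rR A) (rR B) (rR C) agRA agRB (P Trans) HTR x y a a'). Qed.
Lemma RD_B x y b b' : RD x y -> inB x b -> inB y b' -> rR B b b'.
Proof. exact (ED_B (rR A) (rR B) (rR C) agRA agRB (P Trans) HTR x y b b'). Qed.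
Lemma ES_A x y a a' : ES x y -> inA x a -> inA y a' -> rS A a a'.
Proof. exact (ED_A (rS A) (rS B) (rS C) agSA agSB (Q Trans) HTS x y a a'). Qed.
Lemma ES_B x y b b' : ES x y -> inB x b -> inB y b' -> rS B b b'.
Proof. exact (ED_B (rS A) (rS B) (rS C) agSA agSB (Q Trans) HTS x y b b'). Qed.

Lemma SD_A x y a a' : SD x y -> inA x a -> inA y a' -> rS A a a'.
Proof.
  intros [H|[H|(s&H)]] Ha Ha'.
  - eapply ES_A; eauto.
  - apply incA; viaA RD_A.
  - apply (qpropA Symm s). apply incA; viaA RD_A.
Qed.
Lemma SD_B x y b b' : SD x y -> inB x b -> inB y b' -> rS B b b'.
Proof.
  intros [H|[H|(s&H)]] Hb Hb'.
  - eapply ES_B; eauto.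
  - apply incB; viaB RD_B.
  - apply (qpropB Symm s). apply incB; viaB RD_B.
Qed.

Definition Dstr : Str I := mkStr Dc RD SD opD.

Lemma jm_inr b (H : not_in_img g b) : jm b = inr (exist _ b H).
Proof.
  apply (inB_inj _ _ b). apply inB_jm. simpl; auto.
Qed.

Lemma RD_cross a b (Hb : not_in_img g b) : not_in_img f a ->
  RD (inl a) (inr (exist _ b Hb)) -> P Trans /\ exists c, rR A a (f c) /\ rR B (g c) b.
Proof. exact (ED_cross (rR A) (rR B) (rR C) agRA agRB (P Trans) a b Hb). Qed.
Lemma RD_cross' a b (Hb : not_in_img g b) : not_in_img f a ->
  RD (inr (exist _ b Hb)) (inl a) -> P Trans /\ exists c, rR B b (g c) /\ rR A (f c) a.
Proof. exact (ED_cross' (rR A) (rR B) (rR C) agRA agRB (P Trans) a b Hb). Qed.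
Lemma ES_cross a b (Hb : not_in_img g b) : not_in_img f a ->
  ES (inl a) (inr (exist _ b Hb)) -> Q Trans /\ exists c, rS A a (f c) /\ rS B (g c) b.
Proof. exact (ED_cross (rS A) (rS B) (rS C) agSA agSB (Q Trans) a b Hb). Qed.
Lemma ES_cross' a b (Hb : not_in_img g b) : not_in_img f a ->
  ES (inr (exist _ b Hb)) (inl a) -> Q Trans /\ exists c, rS B b (g c) /\ rS A (f c) a.
Proof. exact (ED_cross' (rS A) (rS B) (rS C) agSA agSB (Q Trans) a b Hb). Qed.

Lemma SD_cross a b (Hb : not_in_img g b) : not_in_img f a ->
  SD (inl a) (inr (exist _ b Hb)) ->
  (Q Trans /\ exists c, rS A a (f c) /\ rS B (g c) b) \/
  (P Trans /\ exists c, rR A a (f c) /\ rR B (g c) b) \/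
  (Q Symm /\ P Trans /\ exists c, rR B b (g c) /\ rR A (f c) a).
Proof.
  intros Ha [H|[H|(s&H)]].
  - left; apply (ES_cross a b Hb); auto.
  - right; left; apply (RD_cross a b Hb); auto.
  - right; right; split; auto; apply (RD_cross' a b Hb); auto.
Qed.
Lemma SD_cross' a b (Hb : not_in_img g b) : not_in_img f a ->
  SD (inr (exist _ b Hb)) (inl a) ->
  (Q Trans /\ exists c, rS B b (g c) /\ rS A (f c) a) \/
  (P Trans /\ exists c, rR B b (g c) /\ rR A (f c) a) \/
  (Q Symm /\ P Trans /\ exists c, rR A a (f c) /\ rR B (g c) b).
Proof.
  intros Ha [H|[H|(s&H)]].
  - left; apply (ES_cross' a b Hb); auto.
  - right; left; apply (RD_cross' a b Hb); auto.
  - right; right; split; auto; apply (RD_cross a b Hb); auto.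
Qed.

Lemma SD_wit a b (Hb : not_in_img g b) : not_in_img f a ->
  SD (inl a) (inr (exist _ b Hb)) -> exists c, rS A a (f c) /\ rS B (g c) b.
Proof.
  intros Ha H. destruct (SD_cross a b Hb Ha H) as [(_&c&h1&h2)|[(_&c&h1&h2)|(s&_&c&h1&h2)]];
  exists c; split; auto using incA, incB.
  apply (qpropA Symm s), incA; auto. apply (qpropB Symm s), incB; auto.
Qed.
Lemma SD_wit' a b (Hb : not_in_img g b) : not_in_img f a ->
  SD (inr (exist _ b Hb)) (inl a) -> exists c, rS B b (g c) /\ rS A (f c) a.
Proof.
  intros Ha H. destruct (SD_cross' a b Hb Ha H) as [(_&c&h1&h2)|[(_&c&h1&h2)|(s&_&c&h1&h2)]];
  exists c; split; auto using incA, incB.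
  apply (qpropB Symm s), incB; auto. apply (qpropA Symm s), incA; auto.
Qed.


Lemma dcases x y : (exists a a', inA x a /\ inA y a') \/ (exists b b', inB x b /\ inB y b') \/
  (exists a b Hb, not_in_img f a /\ x = inl a /\ y = inr (exist _ b Hb)) \/
  (exists a b Hb, not_in_img f a /\ y = inl a /\ x = inr (exist _ b Hb)).
Proof.
  destruct x as [a|[b Hb]], y as [a'|[b' Hb']].
  - left; exists a, a'; simpl; auto.
  - destruct (classic (not_in_img f a)) as [N|N].
    + right; right; left. exists a, b', Hb'. auto.
    + apply NNPP in N. destruct N as [c <-]. right; left. exists (g c), b'. simpl; eauto.
  - destruct (classic (not_in_img f a')) as [N|N].
    + right; right; right. exists a', b, Hb. auto.
    + apply NNPP in N. destruct N as [c <-]. right; left. exists b, (g c). simpl; eauto.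
  - right; left. exists b, b'. simpl; auto.
Qed.

Lemma E0_sym (rA : A -> A -> Prop) (rB : B -> B -> Prop) x y :
  (forall a a', rA a a' -> rA a' a) -> (forall b b', rB b b' -> rB b' b) ->
  E0 rA rB x y -> E0 rA rB y x.
Proof. intros hA hB [(a&a'&H1&H2&H3)|(b&b'&H1&H2&H3)]; [left|right]; eauto 7. Qed.
Lemma ED_sym (rA : A -> A -> Prop) (rB : B -> B -> Prop) T x y :
  (forall a a', rA a a' -> rA a' a) -> (forall b b', rB b b' -> rB b' b) ->
  ED rA rB T x y -> ED rA rB T y x.
Proof.
  intros hA hB [H|(t&z&H1&H2)]. left; apply E0_sym; auto.
  right; split; auto; exists z; split; apply E0_sym; auto.
Qed.
Lemma ED_refl (rA : A -> A -> Prop) (rB : B -> B -> Prop) T x :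
  (forall a, rA a a) -> (forall b, rB b b) -> ED rA rB T x x.
Proof.
  intros hA hB. left. destruct (cover x) as [(a&H)|(b&H)]; [left|right]; eauto.
Qed.

Lemma RD_ES x y : Q Trans -> RD x y -> ES x y.
Proof.
  intros tq [H|(t&z&H1&H2)].
  - left. apply (E0_mono (rR A) (rR B) (rS A) (rS B)) in H; auto using incA, incB.
  - right. split; auto. exists z. split.
    + apply (E0_mono (rR A) (rR B) (rS A) (rS B)) in H1; auto using incA, incB.
    + apply (E0_mono (rR A) (rR B) (rS A) (rS B)) in H2; auto using incA, incB.
Qed.

Lemma SD_ES x y : Q Trans -> SD x y -> ES x y.
Proof.
  intros tq [H|[H|(s&H)]]; auto using RD_ES.
  apply ED_sym; [intros; apply (qpropA Symm s); auto|intros; apply (qpropB Symm s); auto|].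
  apply RD_ES; auto.
Qed.

Lemma KD_RS : RS_conds P Q Dstr.
Proof.
  split; [|split].
  - intros p Pp; destruct p; simpl.
    + intros x y z. exact (ED_trans (rR A) (rR B) (rR C) agRA agRB (P Trans) HTR x y z Pp).
    + intros x. apply ED_refl; apply (propA Refl Pp) || apply (propB Refl Pp).
    + intros x y. apply ED_sym; intros; [apply (propA Symm Pp)|apply (propB Symm Pp)]; auto.
    + intros x H. destruct (cover x) as [(a&Ha)|(b&Hb)].
      * apply (propA Irrefl Pp a). viaA RD_A.
      * apply (propB Irrefl Pp b). viaB RD_B.
    + intros x y H1 H2.
      destruct (dcases x y) as [(a&a'&Ha&Ha')|[(b&b'&Hb&Hb')|[(a&b&Hb&Na&->&->)|(a&b&Hb&Na&->&->)]]].
      * assert (a = a') as <- by (apply (propA Antisym Pp); viaA RD_A).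
        eapply inA_inj; eauto.
      * assert (b = b') as <- by (apply (propB Antisym Pp); viaB RD_B).
        eapply inB_inj; eauto.
      * exfalso. destruct (RD_cross a b Hb Na H1) as (t&c&h1&h2).
        destruct (RD_cross' a b Hb Na H2) as (_&c'&h3&h4).
        destruct (HTR t) as (tA&tB).
        assert (E : f c = f c'). { apply (propA Antisym Pp). apply agRA, agRB; eauto. eauto. }
        apply Na. exists c. apply (propA Antisym Pp). rewrite E; auto. auto.
      * exfalso. destruct (RD_cross a b Hb Na H2) as (t&c&h1&h2).
        destruct (RD_cross' a b Hb Na H1) as (_&c'&h3&h4).
        destruct (HTR t) as (tA&tB).
        assert (E : f c = f c'). { apply (propA Antisym Pp). apply agRA, agRB; eauto. eauto. }
        apply Na. exists c. apply (propA Antisym Pp). rewrite E; auto. auto.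
  - intros p Pp; destruct p; simpl.
    + intros x y z H1 H2. left. apply SD_ES in H1; auto. apply SD_ES in H2; auto.
      exact (ED_trans (rS A) (rS B) (rS C) agSA agSB (Q Trans) HTS x y z Pp H1 H2).
    + intros x. left. apply ED_refl; apply (qpropA Refl Pp) || apply (qpropB Refl Pp).
    + intros x y [H|[H|(s&H)]].
      * left. apply ED_sym; auto; intros; [apply (qpropA Symm Pp)|apply (qpropB Symm Pp)]; auto.
      * right; right; auto.
      * right; left; auto.
    + intros x H. destruct (cover x) as [(a&Ha)|(b&Hb)].
      * apply (qpropA Irrefl Pp a). viaA SD_A.
      * apply (qpropB Irrefl Pp b). viaB SD_B.
    + assert (AS : forall a b Hb, not_in_img f a -> SD (inl a) (inr (exist _ b Hb)) ->
                  SD (inr (exist _ b Hb)) (inl a) -> False).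
      { intros a b Hb Na H1 H2.
        destruct (classic (Q Symm)) as [sy|nsy].
        - destruct (SD_wit a b Hb Na H1) as (c&h1&h2). apply Na. exists c.
          apply (qpropA Antisym Pp); auto. apply (qpropA Symm sy); auto.
        - destruct (classic (Q Trans)) as [tq|ntq].
          + destruct (SD_wit a b Hb Na H1) as (c&h1&h2).
            destruct (SD_wit' a b Hb Na H2) as (c'&h3&h4).
            destruct (HTS tq) as (tA&tB).
            assert (E : f c = f c'). { apply (qpropA Antisym Pp). apply agSA, agSB; eauto. eauto. }
            apply Na. exists c. apply (qpropA Antisym Pp). rewrite E; auto. auto.
          + destruct (SD_cross a b Hb Na H1) as [(tq&_)|[(t&c&h1&h2)|(s&_)]]; try tauto.
            destruct (SD_cross' a b Hb Na H2) as [(tq&_)|[(_&c'&h3&h4)|(s&_)]]; try tauto.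
            destruct (HTR t) as (tA&tB).
            assert (E : f c = f c'). { apply (qpropA Antisym Pp); apply incA. apply agRA, agRB; eauto. eauto. }
            apply Na. exists c. apply (qpropA Antisym Pp); apply incA. rewrite E; auto. auto. }
      intros x y H1 H2.
      destruct (dcases x y) as [(a&a'&Ha&Ha')|[(b&b'&Hb&Hb')|[(a&b&Hb&Na&->&->)|(a&b&Hb&Na&->&->)]]].
      * assert (a = a') as <- by (apply (qpropA Antisym Pp); viaA SD_A).
        eapply inA_inj; eauto.
      * assert (b = b') as <- by (apply (qpropB Antisym Pp); viaB SD_B).
        eapply inB_inj; eauto.
      * exfalso; eauto.
      * exfalso; eauto.
  - simpl. intros x y H. right; left; auto.
Qed.

Lemma KD_ops k : okR (kd k) (rR Dstr) (op Dstr k) /\ okS (kd k) (rS Dstr) (op Dstr k).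
Proof.
  destruct KA as (_&oA), KB as (_&oB). destruct (oA k) as (rA&sA), (oB k) as (rB&sB).
  simpl. destruct (kd k); simpl in *; split; auto;
  try (apply ED_pres; auto; fail); try (apply ED_rev; auto; fail).
  - intros x y [H|[H|(s&H)]].
    + left. apply ED_pres; auto.
    + right; left. apply ED_pres; auto.
    + right; right. split; auto. apply ED_pres; auto.
  - intros x y [H|[H|(s&H)]].
    + left. apply ED_rev; auto.
    + right; left. apply ED_rev; auto.
    + right; right. split; auto. apply ED_rev; auto.
Qed.

Lemma KG_D : KG P Q kd Dstr.
Proof. split. apply KD_RS. apply KD_ops. Qed.

Lemma emb_i : @emb I A Dstr inl.
Proof.
  split; [|split; [|split]]; simpl.
  - intros x y H; injection H; auto.
  - intros x y; split; [intros; left; left; exists x, y; simpl; auto|intros H; exact (RD_A _ _ x y H eq_refl eq_refl)].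
  - intros x y; split; [intros; left; left; left; exists x, y; simpl; auto|intros H; exact (SD_A _ _ x y H eq_refl eq_refl)].
  - auto.
Qed.

Lemma emb_j : @emb I B Dstr jm.
Proof.
  split; [|split; [|split]]; simpl.
  - intros x y H. apply (inB_uniq (jm x)); [apply inB_jm|rewrite H; apply inB_jm].
  - intros x y; split; [intros; left; right; exists x, y; auto using inB_jm|intros H; exact (RD_B _ _ x y H (inB_jm x) (inB_jm y))].
  - intros x y; split; [intros; left; left; right; exists x, y; auto using inB_jm|intros H; exact (SD_B _ _ x y H (inB_jm x) (inB_jm y))].
  - intros k x. apply (inB_inj _ _ (op B k x)). apply inB_jm. apply opD_B, inB_jm.
Qed.

Lemma ij_agree c : inl (f c) = jm (g c).
Proof. apply (inB_inj _ _ (g c)). simpl; eauto. apply inB_jm. Qed.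

Lemma ij_strong a b : inl a = jm b -> exists c, f c = a /\ g c = b.
Proof. intros E. pose proof (inB_jm b) as H. rewrite <- E in H. exact H. Qed.

End Main.

End Amalg.

Theorem superSAP_KG {I} (P Q : rprop -> Prop) (kd : I -> okind) : superSAP_RS (KG P Q kd).
Proof.
  intros A B C f g KA KB KC ef eg.
  pose proof ef as (finj & fR & fS & fop). pose proof eg as (ginj & gR & gS & gop).
  exists (Dstr A B C f g P Q), inl, (jm A B C f g).
  split; [exact (KG_D A B C f g finj ginj fop gop P Q kd KA KB fR gR fS gS)|].
  split; [exact (emb_i A B C f g finj P Q kd KA KB fR gR fS gS)|].
  split; [exact (emb_j A B C f g finj ginj fop gop P Q kd KA KB fR gR fS gS)|].
  split; [exact (ij_agree A B C f g ginj)|].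
  split; [intros a b E; exact (ij_strong A B C f g a b E)|].
  intros sel a b Na Nb. rewrite (jm_inr A B C f g ginj b Nb).
  destruct sel; simpl; split; intros H.
  - destruct (RD_cross A B C f g finj P fR gR a b Nb Na H) as (_&c&h1&h2); eauto.
  - destruct (RD_cross' A B C f g finj P fR gR a b Nb Na H) as (_&c&h1&h2); eauto.
  - exact (SD_wit A B C f g finj P Q kd KA KB fR gR fS gS a b Nb Na H).
  - exact (SD_wit' A B C f g finj P Q kd KA KB fR gR fS gS a b Nb Na H).
Qed.

Lemma superSAP_ext {I} (K K' : Str I -> Prop) : (forall N, K N <-> K' N) -> superSAP_RS K -> superSAP_RS K'.
Proof.
  intros E H A B C f g KA KB KC ef eg.
  destruct (H A B C f g) as (D&i&j&KD&R); try apply E; auto.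
  exists D, i, j. split; auto. apply E; auto.
Qed.

Lemma superSAP_SAP {I} (K : Str I -> Prop) : superSAP_RS K -> SAP K.
Proof.
  intros H A B C f g KA KB KC ef eg.
  destruct (H A B C f g) as (D&i&j&KD&e1&e2&e3&e4&_); auto.
  exists D, i, j; auto.
Qed.

Definition kd4 {I1 I2 I3 I4 : Type} (x : I1 + I2 + I3 + I4) : okind :=
  match x with inl (inl (inl _)) => kPP | inl (inl (inr _)) => kRR | inl (inr _) => kP | inr _ => kRv end.

Lemma KPQ_ops_KG P Q I1 I2 I3 I4 N : KPQ_ops P Q I1 I2 I3 I4 N <-> KG P Q kd4 N.
Proof.
  unfold KPQ_ops, KG. split.
  - intros (H&h1&h2&h3&h4). split; auto. intros [[[k|k]|k]|k]; simpl; auto.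
  - intros (H&h). split; [auto|split; [|split; [|split]]]; intros k.
    + exact (h (inl (inl (inl k)))).
    + exact (h (inl (inl (inr k)))).
    + exact (proj1 (h (inl (inr k)))).
    + exact (proj1 (h (inr k))).
Qed.

Definition kd0 (x : Empty_set) : okind := match x with end.
Lemma KPQ_KG P Q N : KPQ P Q N <-> KG P Q kd0 N.
Proof. unfold KPQ, KG. split; [intros H; split; auto; intros []|intros (H&_); auto]. Qed.

End XAmal.
Import XAmal.

Module XFr1.

Definition cid := constructive_indefinite_description.
Definition emi := excluded_middle_informative.

Lemma sig_eq {T} {P : T -> Prop} (x y : {t | P t}) : proj1_sig x = proj1_sig y -> x = y.
Proof. destruct x, y; simpl; intros <-. f_equal. apply proof_irrelevance. Qed.

Definition enum (T : Type) := {e : nat -> T | forall t, exists n, e n = t}.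

Definition enum_nat : enum nat := exist _ (fun n => n) (fun t => ex_intro _ t eq_refl).

Definition enum_prod {A B} (ea : enum A) (eb : enum B) : enum (A * B).
Proof.
  exists (fun n => (proj1_sig ea (fst (Cantor.of_nat n)), proj1_sig eb (snd (Cantor.of_nat n)))).
  intros [a b]. destruct (proj2_sig ea a) as [n Hn]. destruct (proj2_sig eb b) as [m Hm].
  exists (Cantor.to_nat (n, m)). rewrite Cantor.cancel_of_to. simpl. rewrite Hn, Hm; auto.
Defined.

Fixpoint dlf (fu n : nat) : list nat :=
  match fu with 0 => [] | S fu' =>
    match n with 0 => [] | S n' => fst (Cantor.of_nat n') :: dlf fu' (snd (Cantor.of_nat n')) end end.
Fixpoint encl (l : list nat) : nat :=
  match l with [] => 0 | a :: r => S (Cantor.to_nat (a, encl r)) end.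
Lemma dlf_encl l fu : encl l < fu -> dlf fu (encl l) = l.
Proof.
  revert fu; induction l as [|a r IH]; intros fu H.
  - destruct fu; reflexivity.
  - destruct fu as [|fu]; [cbn [encl] in H; lia|]. cbn [dlf encl]. rewrite Cantor.cancel_of_to. cbn [fst snd]. f_equal. apply IH.
    cbn [encl] in H. pose proof (Cantor.to_nat_non_decreasing a (encl r)). lia.
Qed.

Definition enum_list {A} (ea : enum A) : enum (list A).
Proof.
  exists (fun n => map (proj1_sig ea) (dlf (S n) n)).
  intros l. induction l as [|a r IH].
  - exists 0. reflexivity.
  - destruct IH as [n Hn]. destruct (proj2_sig ea a) as [k Hk].
    assert (exists ln, map (proj1_sig ea) ln = a :: r) as [ln Hln].
    { clear Hn. assert (forall r : list A, exists ln, map (proj1_sig ea) ln = r) as G.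
      { induction r0 as [|x r0 IH]; [exists []; auto|]. destruct IH as [l0 H0].
        destruct (proj2_sig ea x) as [k0 H1]. exists (k0 :: l0); simpl; congruence. }
      apply G. }
    exists (encl ln). rewrite dlf_encl; auto.
Defined.

Lemma finite_nodup T : finite_type T -> exists l : list T, NoDup l /\ forall x, In x l.
Proof.
  intros [l H]. exists (nodup (fun x y => emi (x = y)) l). split.
  apply NoDup_nodup. intros x. apply nodup_In. auto.
Qed.

Lemma finite_inj {T A} (f : T -> A) (l : list A) :
  (forall t, In (f t) l) -> (forall x y, f x = f y -> x = y) -> finite_type T.
Proof.
  intros H1 H2.
  exists (flat_map (fun a => match emi (exists t, f t = a) with
                            | left h => [proj1_sig (cid _ _ h)] | right _ => [] end) l).
  intros t. apply in_flat_map. exists (f t). split; auto.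
  destruct (emi (exists t0, f t0 = f t)) as [h|h].
  - left. destruct (cid _ _ h) as [t' Ht']; simpl. apply H2; auto.
  - exfalso; eauto.
Qed.

Fixpoint lookup (le : list (nat * nat)) (x : nat) : nat :=
  match le with [] => 0 | (a, b) :: r => if Nat.eqb a x then b else lookup r x end.

Lemma lookup_map' (F : nat -> nat) n s x : s <= x < s + n -> lookup (map (fun y => (y, F y)) (seq s n)) x = F x.
Proof.
  revert s; induction n as [|n IH]; intros s H; [lia|]. simpl.
  destruct (Nat.eqb_spec s x). subst; auto. apply IH; lia.
Qed.

Fixpoint pos_in (x : nat) (l : list nat) : nat :=
  match l with [] => 0 | a :: r => if Nat.eqb a x then 0 else S (pos_in x r) end.
Lemma pos_in_spec x l : In x l -> pos_in x l < length l /\ nth (pos_in x l) l 0 = x.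
Proof.
  induction l as [|a r IH]; simpl; [tauto|]. intros H.
  destruct (Nat.eqb_spec a x). split; auto; lia.
  destruct H as [H|H]; [congruence|]. destruct (IH H); split; auto; lia.
Qed.

End XFr1.
Import XFr1.

Module XFr2.

Lemma iso_inv {I} {A B : Str I} (h : A -> B) : iso h ->
  exists h' : B -> A, emb h' /\ (forall x, h (h' x) = x) /\ (forall y, h' (h y) = y).
Proof.
  intros ((hinj & hR & hS & hop) & hsur).
  exists (fun y => proj1_sig (cid _ _ (hsur y))).
  assert (K : forall y, h (proj1_sig (cid _ _ (hsur y))) = y) by (intros y; destruct (cid _ _ (hsur y)); auto).
  assert (K' : forall x, proj1_sig (cid _ _ (hsur (h x))) = x) by (intros x; apply hinj; apply K).
  split; [|split; auto].
  split; [|split; [|split]].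
  - intros x y E. rewrite <- (K x), <- (K y), E; auto.
  - intros x y. rewrite hR, !K; tauto.
  - intros x y. rewrite hS, !K; tauto.
  - intros i x. apply hinj. rewrite K, hop, K. auto.
Qed.

Lemma emb_comp {I} {A B C : Str I} (h : A -> B) (k : B -> C) : emb h -> emb k -> emb (fun x => k (h x)).
Proof.
  intros (h1&h2&h3&h4) (k1&k2&k3&k4). split; [|split; [|split]].
  - intros x y E; apply h1, k1, E.
  - intros x y; rewrite h2, k2; tauto.
  - intros x y; rewrite h3, k3; tauto.
  - intros i x; rewrite h4, k4; auto.
Qed.

Lemma emb_id {I} (A : Str I) : emb (fun x : A => x).
Proof. split; [|split; [|split]]; auto; tauto. Qed.

Section FS.
Variable I : Type.
Variable lI : list I.
Hypothesis HlI : forall i, In i lI.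

Record FS := { fn : nat; fr : nat -> nat -> Prop; fs : nat -> nat -> Prop; fo : I -> nat -> nat;
  fo_ok : forall i x, x < fn -> fo i x < fn }.

Definition strF (F : FS) : Str I :=
  mkStr {x : nat | x < fn F} (fun x y => fr F (proj1_sig x) (proj1_sig y))
    (fun x y => fs F (proj1_sig x) (proj1_sig y))
    (fun i x => exist _ (fo F i (proj1_sig x)) (fo_ok F i _ (proj2_sig x))).

Definition EmbN (F G : FS) (h : nat -> nat) : Prop :=
  (forall x, x < fn F -> h x < fn G) /\
  (forall x y, x < fn F -> y < fn F -> h x = h y -> x = y) /\
  (forall x y, x < fn F -> y < fn F -> (fr F x y <-> fr G (h x) (h y))) /\
  (forall x y, x < fn F -> y < fn F -> (fs F x y <-> fs G (h x) (h y))) /\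
  (forall i x, x < fn F -> h (fo F i x) = fo G i (h x)).

Definition liftN (F G : FS) (h : nat -> nat) (H : forall x, x < fn F -> h x < fn G) :
  strF F -> strF G := fun x => exist _ (h (proj1_sig x)) (H _ (proj2_sig x)).

Lemma liftN_emb F G h (E : EmbN F G h) : emb (liftN F G h (proj1 E)).
Proof.
  destruct E as (e1&e2&e3&e4&e5). split; [|split; [|split]]; simpl.
  - intros [x px] [y py] H. apply sig_eq. simpl. apply e2; auto. apply (f_equal (@proj1_sig _ _)) in H. exact H.
  - intros [x px] [y py]; simpl; auto.
  - intros [x px] [y py]; simpl; auto.
  - intros i [x px]. apply sig_eq. simpl. auto.
Qed.

Definition idx (i : I) : nat := proj1_sig (cid _ _ (In_nth_error lI i (HlI i))).
Lemma idx_spec i : nth_error lI (idx i) = Some i.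
Proof. unfold idx. destruct cid; auto. Qed.

Definition Code := (nat * list (nat * nat) * list (nat * nat) * list (list nat))%type.

Definition dec_op (m : nat) (tbl : list (list nat)) (i : I) (x : nat) : nat :=
  let y := nth x (nth (idx i) tbl []) 0 in if y <? m then y else 0.
Lemma dec_op_ok m tbl i x : x < m -> dec_op m tbl i x < m.
Proof. unfold dec_op. intros H. destruct (Nat.ltb_spec (nth x (nth (idx i) tbl []) 0) m); lia. Qed.

Definition decode (c : Code) : FS :=
  match c with (m, lR, lS, tbl) =>
    {| fn := m; fr := fun x y => In (x, y) lR; fs := fun x y => In (x, y) lS;
       fo := dec_op m tbl; fo_ok := dec_op_ok m tbl |} end.

Lemma code_of_finite (B : Str I) : finite_type B ->
  exists (c : Code) (phi : strF (decode c) -> B), iso phi.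
Proof.
  intros HB. destruct (finite_nodup _ HB) as [lB [ND AL]].
  destruct lB as [|b0 lB'] eqn:ElB.
  - exists (0, [], [], []). exists (fun x => False_rect _ (Nat.nlt_0_r _ (proj2_sig x))).
    split; [split; [|split; [|split]]|].
    + intros [x px]; simpl in px; lia.
    + intros [x px]; simpl in px; lia.
    + intros [x px]; simpl in px; lia.
    + intros i [x px]; simpl in px; lia.
    + intros y; destruct (AL y).
  - rewrite <- ElB in *. set (m := length lB).
    set (elem := fun x => nth x lB b0).
    assert (Hpos : forall b, {p | p < m /\ elem p = b}).
    { intros b. apply cid. destruct (In_nth lB b b0 (AL b)) as [n [H1 H2]]. exists n; auto. }
    set (pos := fun b => proj1_sig (Hpos b)).
    assert (pos_lt : forall b, pos b < m) by (intros b; unfold pos; destruct (Hpos b); simpl; tauto).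
    assert (pos_el : forall b, elem (pos b) = b) by (intros b; unfold pos; destruct (Hpos b); simpl; tauto).
    assert (el_inj : forall x y, x < m -> y < m -> elem x = elem y -> x = y).
    { intros x y Hx Hy E. eapply NoDup_nth; eauto. }
    set (tv := fun (r : B -> B -> Prop) p => if emi (r (elem (fst p)) (elem (snd p))) then true else false).
    set (allp := list_prod (seq 0 m) (seq 0 m)).
    set (Fd := fun d => match nth_error lI d with
                  | Some i => map (fun x => pos (op B i (elem x))) (seq 0 m) | None => [] end).
    set (tbl := map Fd (seq 0 (length lI))).
    exists (m, filter (tv (rR B)) allp, filter (tv (rS B)) allp, tbl).
    assert (Hop : forall i x, x < m -> dec_op m tbl i x = pos (op B i (elem x))).
    { intros i x Hx. unfold dec_op.
      assert (Hi : idx i < length lI) by (apply nth_error_Some; rewrite idx_spec; congruence).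
      assert (E1 : nth (idx i) tbl [] = map (fun x => pos (op B i (elem x))) (seq 0 m)).
      { unfold tbl. rewrite nth_indep with (d' := Fd 0)
          by (rewrite length_map, length_seq; auto).
        rewrite (map_nth Fd), seq_nth by auto. simpl. unfold Fd. rewrite idx_spec. auto. }
      rewrite E1. set (G := fun x => pos (op B i (elem x))).
      rewrite nth_indep with (d' := G 0) by (rewrite length_map, length_seq; auto).
      rewrite (map_nth G), seq_nth by auto. simpl. unfold G.
      destruct (Nat.ltb_spec (pos (op B i (elem x))) m); auto. specialize (pos_lt (op B i (elem x))); lia. }
    assert (Hrel : forall r x y, x < m -> y < m -> (In (x, y) (filter (tv r) allp) <-> r (elem x) (elem y))).
    { intros r x y Hx Hy. rewrite filter_In. unfold allp. rewrite in_prod_iff, !in_seq. unfold tv; simpl.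
      destruct (emi (r (elem x) (elem y))); split; intros; try tauto; try discriminate. split; auto; lia.
      destruct H; discriminate. }
    exists (fun x => elem (proj1_sig x)).
    split; [split; [|split; [|split]]|].
    + intros [x px] [y py]; simpl; intros E. apply sig_eq; simpl. apply el_inj; auto.
    + intros [x px] [y py]; simpl. apply Hrel; auto.
    + intros [x px] [y py]; simpl. apply Hrel; auto.
    + intros i [x px]; simpl. rewrite Hop by auto. apply pos_el.
    + intros y. exists (exist _ (pos y) (pos_lt y)). simpl. apply pos_el.
Qed.
End FS.

End XFr2.
Import XFr2.

Module XFr3.

Section Recode.
Variable I : Type.
Variables (F B : FS I) (D : Str I) (i : strF I F -> D) (j : strF I B -> D).
Hypotheses (ei : emb i) (ej : emb j).

Let n := fn I F.
Let m := fn I B.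

Definition inImg (b : nat) : Prop := exists a : strF I F, exists q : b < m, i a = j (exist _ b q).

Definition newB : list nat := filter (fun b => if emi (inImg b) then false else true) (seq 0 m).

Lemma newB_spec b : In b newB <-> b < m /\ ~ inImg b.
Proof.
  unfold newB. rewrite filter_In, in_seq. destruct (emi (inImg b)); split; intros; try tauto.
  destruct H; discriminate. destruct H; auto. split; [lia|auto].
Qed.
Lemma newB_nodup : NoDup newB.
Proof. apply NoDup_filter, seq_NoDup. Qed.

Definition n' := n + length newB.

Lemma newlt x : x < n' -> ~ x < n -> nth (x - n) newB 0 < m.
Proof.
  intros H q. apply newB_spec. apply nth_In. unfold n' in H. lia.
Qed.

Definition repD (x : nat) (H : x < n') : D :=
  match lt_dec x n with
  | left p => i (exist _ x p)
  | right q => j (exist _ (nth (x - n) newB 0) (newlt x H q)) end.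

Lemma repD_irr x H H' : repD x H = repD x H'.
Proof. f_equal. apply proof_irrelevance. Qed.

Definition code (b : nat) : nat :=
  match emi (inImg b) with
  | left h => proj1_sig (proj1_sig (cid _ _ h))
  | right _ => n + pos_in b newB end.

Lemma code_lt b : b < m -> code b < n'.
Proof.
  intros Hb. unfold code. destruct (emi (inImg b)) as [h|h].
  - destruct (cid _ _ h) as [[a pa] Ha]; simpl. unfold n'; lia.
  - assert (In b newB) by (apply newB_spec; auto).
    destruct (pos_in_spec b newB H). unfold n'; lia.
Qed.

Lemma code_spec b (q : b < m) (H : code b < n') : repD (code b) H = j (exist _ b q).
Proof.
  revert H. unfold code. destruct (emi (inImg b)) as [h|h]; intros H.
  - destruct (cid _ _ h) as [[a pa] Ha]; simpl in *. destruct Ha as [q' Ha].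
    unfold repD. destruct (lt_dec a n) as [p|p]; [|contradiction].
    transitivity (i (exist _ a pa)). f_equal; apply sig_eq; auto.
    rewrite Ha. f_equal. apply sig_eq; auto.
  - assert (Hin : In b newB) by (apply newB_spec; auto).
    destruct (pos_in_spec b newB Hin) as [h1 h2].
    unfold repD. destruct (lt_dec (n + pos_in b newB) n) as [p|p]; [lia|].
    f_equal. apply sig_eq. simpl. replace (n + pos_in b newB - n) with (pos_in b newB) by lia. auto.
Qed.

Lemma repD_inj x y H H' : repD x H = repD y H' -> x = y.
Proof.
  destruct ei as (iinj&_), ej as (jinj&_).
  unfold repD. destruct (lt_dec x n) as [p|p], (lt_dec y n) as [p'|p']; intros E.
  - apply iinj in E. apply (f_equal (@proj1_sig _ _)) in E. exact E.
  - exfalso. assert (Hin : In (nth (y - n) newB 0) newB) by (apply nth_In; unfold n' in H'; lia).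
    apply newB_spec in Hin. apply (proj2 Hin). exists (exist _ x p). eexists. exact E.
  - exfalso. assert (Hin : In (nth (x - n) newB 0) newB) by (apply nth_In; unfold n' in H; lia).
    apply newB_spec in Hin. apply (proj2 Hin). exists (exist _ y p'). eexists. symmetry; exact E.
  - apply jinj in E. apply (f_equal (@proj1_sig _ _)) in E. simpl in E.
    assert (x - n = y - n).
    { eapply NoDup_nth; [apply newB_nodup| | |exact E]; unfold n' in *; lia. }
    lia.
Qed.

Definition fo' (k : I) (x : nat) : nat :=
  if x <? n then fo I F k x else if x <? n' then code (fo I B k (nth (x - n) newB 0)) else 0.

Lemma fo'_ok k x : x < n' -> fo' k x < n'.
Proof.
  intros H. unfold fo'. destruct (Nat.ltb_spec x n).
  - pose proof (fo_ok I F k x H0). unfold n' in *; fold n in H1. lia.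
  - destruct (Nat.ltb_spec x n'); [|lia]. apply code_lt. apply fo_ok. apply newlt; auto; lia.
Qed.

Definition F' : FS I :=
  {| fn := n'; fr := fun x y => exists hx hy, rR D (repD x hx) (repD y hy);
     fs := fun x y => exists hx hy, rS D (repD x hx) (repD y hy);
     fo := fo'; fo_ok := fo'_ok |}.

Lemma repD_hom_aux k x (H : x < n') y (Hy : y < n') : y = fo' k x -> repD y Hy = op D k (repD x H).
Proof.
  destruct ei as (_&_&_&iop), ej as (_&_&_&jop).
  unfold fo'. destruct (Nat.ltb_spec x n) as [p|p]; intros E; subst y.
  - unfold repD at 1. destruct (lt_dec (fo I F k x) n) as [p3|p3].
    + unfold repD. destruct (lt_dec x n) as [p4|p4]; [|lia]. rewrite <- iop. f_equal. apply sig_eq; auto.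
    + exfalso. apply p3. apply fo_ok. auto.
  - revert Hy. destruct (Nat.ltb_spec x n') as [p3|p3]; [|lia]. intros Hy.
    assert (q : fo I B k (nth (x - n) newB 0) < m) by (apply fo_ok; apply newlt; auto; lia).
    rewrite (code_spec _ q Hy).
    unfold repD. destruct (lt_dec x n) as [p4|p4]; [lia|]. rewrite <- jop. f_equal. apply sig_eq; auto.
Qed.

Lemma repD_hom k x (H : x < n') : repD (fo' k x) (fo'_ok k x H) = op D k (repD x H).
Proof. apply repD_hom_aux; auto. Qed.

Lemma Ext_F' : fn I F <= fn I F' /\
  (forall x y, x < fn I F -> y < fn I F -> (fr I F x y <-> fr I F' x y) /\ (fs I F x y <-> fs I F' x y)) /\
  (forall k x, x < fn I F -> fo I F' k x = fo I F k x).
Proof.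
  destruct ei as (_&iR&iS&_).
  split; [simpl; unfold n'; fold n; lia|split].
  - intros x y Hx Hy.
    assert (Hx' : x < n') by (unfold n'; fold n in Hx; lia).
    assert (Hy' : y < n') by (unfold n'; fold n in Hy; lia).
    assert (Ex : repD x Hx' = i (exist _ x Hx)).
    { unfold repD. destruct (lt_dec x n); [|contradiction]. f_equal. apply sig_eq; auto. }
    assert (Ey : repD y Hy' = i (exist _ y Hy)).
    { unfold repD. destruct (lt_dec y n); [|contradiction]. f_equal. apply sig_eq; auto. }
    simpl. split; split.
    + intros h. exists Hx', Hy'. rewrite Ex, Ey. apply (iR (exist _ x Hx) (exist _ y Hy)). exact h.
    + intros (hx&hy&h). rewrite (repD_irr x hx Hx'), (repD_irr y hy Hy'), Ex, Ey in h.
      apply (iR (exist _ x Hx) (exist _ y Hy)) in h. exact h.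
    + intros h. exists Hx', Hy'. rewrite Ex, Ey. apply (iS (exist _ x Hx) (exist _ y Hy)). exact h.
    + intros (hx&hy&h). rewrite (repD_irr x hx Hx'), (repD_irr y hy Hy'), Ex, Ey in h.
      apply (iS (exist _ x Hx) (exist _ y Hy)) in h. exact h.
  - intros k x Hx. simpl. unfold fo'. destruct (Nat.ltb_spec x n); auto. fold n in Hx. lia.
Qed.

Definition hD (x : strF I F') : D := repD (proj1_sig x) (proj2_sig x).

Lemma hD_emb : emb hD.
Proof.
  split; [|split; [|split]].
  - intros [x px] [y py]; unfold hD; simpl. intros E. apply sig_eq; simpl. eapply repD_inj; eauto.
  - intros [x px] [y py]; unfold hD; simpl. split.
    + intros (hx&hy&h). rewrite (repD_irr x hx px), (repD_irr y hy py) in h. exact h.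
    + intros h. exists px, py. exact h.
  - intros [x px] [y py]; unfold hD; simpl. split.
    + intros (hx&hy&h). rewrite (repD_irr x hx px), (repD_irr y hy py) in h. exact h.
    + intros h. exists px, py. exact h.
  - intros k [x px]; unfold hD; simpl. apply repD_hom.
Qed.

Lemma code_emb : EmbN I B F' code.
Proof.
  destruct ej as (jinj&jR&jS&jop).
  split; [|split; [|split; [|split]]].
  - intros b Hb. apply code_lt; auto.
  - intros b b' Hb Hb' E.
    pose proof (code_spec b Hb (code_lt b Hb)) as E1.
    pose proof (code_spec b' Hb' (code_lt b' Hb')) as E2.
    revert E1 E2. generalize (code_lt b Hb), (code_lt b' Hb'). rewrite E. intros h1 h2 E1 E2.
    rewrite (repD_irr _ h1 h2) in E1. rewrite E1 in E2. apply jinj in E2.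
    apply (f_equal (@proj1_sig _ _)) in E2. exact E2.
  - intros b b' Hb Hb'. simpl. split.
    + intros h. exists (code_lt b Hb), (code_lt b' Hb').
      rewrite (code_spec b Hb), (code_spec b' Hb'). apply (jR (exist _ b Hb) (exist _ b' Hb')). exact h.
    + intros (hx&hy&h). rewrite (code_spec b Hb), (code_spec b' Hb') in h.
      apply (jR (exist _ b Hb) (exist _ b' Hb')) in h. exact h.
  - intros b b' Hb Hb'. simpl. split.
    + intros h. exists (code_lt b Hb), (code_lt b' Hb').
      rewrite (code_spec b Hb), (code_spec b' Hb'). apply (jS (exist _ b Hb) (exist _ b' Hb')). exact h.
    + intros (hx&hy&h). rewrite (code_spec b Hb), (code_spec b' Hb') in h.
      apply (jS (exist _ b Hb) (exist _ b' Hb')) in h. exact h.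
  - intros k b Hb. simpl.
    assert (q : fo I B k b < m) by (apply fo_ok; auto).
    apply (repD_inj _ _ (code_lt _ q) (fo'_ok k _ (code_lt b Hb))).
    rewrite repD_hom, (code_spec _ q), (code_spec b Hb).
    rewrite <- jop. f_equal. apply sig_eq; auto.
Qed.

Lemma code_comm x (px : x < n) b (q : b < m) : i (exist _ x px) = j (exist _ b q) -> code b = x.
Proof.
  destruct ei as (iinj&_). intros E.
  unfold code. destruct (emi (inImg b)) as [h|h].
  - destruct (cid _ _ h) as [a [q' Ha]]; simpl.
    assert (a = exist _ x px). { apply iinj. rewrite Ha, E. f_equal. apply sig_eq; auto. }
    subst; auto.
  - exfalso. apply h. exists (exist _ x px), q. exact E.
Qed.

End Recode.

End XFr3.
Import XFr3.

Module XFr4.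

Section Chain.
Variable I : Type.
Variable lI : list I.
Hypothesis HlI : forall i, In i lI.
Variable K : Str I -> Prop.
Hypothesis Kher : forall (D E : Str I) (h : E -> D), K D -> emb h -> K E.
Hypothesis Kap : AP K.
Hypothesis Kempty : forall E : Str I, (E -> False) -> K E.

Inductive genF (F : FS I) (l : list nat) : nat -> Prop :=
| gF_base x : In x l -> genF F l x
| gF_op k x : genF F l x -> genF F l (fo I F k x).

Definition EmbOn (F : FS I) (l : list nat) (B : FS I) (e : nat -> nat) : Prop :=
  (forall x, genF F l x -> e x < fn I B) /\
  (forall x y, genF F l x -> genF F l y -> e x = e y -> x = y) /\
  (forall x y, genF F l x -> genF F l y -> (fr I F x y <-> fr I B (e x) (e y))) /\
  (forall x y, genF F l x -> genF F l y -> (fs I F x y <-> fs I B (e x) (e y))) /\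
  (forall k x, genF F l x -> e (fo I F k x) = fo I B k (e x)).

Definition Task := (Code * list nat * list (nat * nat))%type.

Definition Valid (F : FS I) (t : Task) : Prop :=
  match t with (c, l, le) =>
    K (strF I F) /\ K (strF I (decode I lI HlI c)) /\ (forall x, In x l -> x < fn I F) /\
    EmbOn F l (decode I lI HlI c) (lookup le) end.

Definition Ext (F F' : FS I) : Prop :=
  fn I F <= fn I F' /\
  (forall x y, x < fn I F -> y < fn I F -> (fr I F x y <-> fr I F' x y) /\ (fs I F x y <-> fs I F' x y)) /\
  (forall k x, x < fn I F -> fo I F' k x = fo I F k x).

Lemma Ext_refl F : Ext F F.
Proof. split; [lia|split; [tauto|auto]]. Qed.
Lemma Ext_trans F1 F2 F3 : Ext F1 F2 -> Ext F2 F3 -> Ext F1 F3.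
Proof.
  intros (a1&b1&c1) (a2&b2&c2). split; [lia|split].
  - intros x y Hx Hy. destruct (b1 x y Hx Hy), (b2 x y) as [h1 h2]; try lia. split; [rewrite H, h1|rewrite H0, h2]; tauto.
  - intros k x Hx. rewrite c2 by lia. auto.
Qed.

Lemma genF_lt F l x : (forall y, In y l -> y < fn I F) -> genF F l x -> x < fn I F.
Proof. intros H G; induction G; auto. apply fo_ok; auto. Qed.

Lemma amal_exists F c l le : Valid F (c, l, le) ->
  exists F', Ext F F' /\ K (strF I F') /\
    exists bm, EmbN I (decode I lI HlI c) F' bm /\ forall x, genF F l x -> bm (lookup le x) = x.
Proof.
  intros (KF & KB & Hl & (e1&e2&e3&e4&e5)).
  set (B := decode I lI HlI c) in *. set (e := lookup le) in *.
  set (C := mkStr {x : nat | genF F l x} (fun x y => fr I F (proj1_sig x) (proj1_sig y))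
          (fun x y => fs I F (proj1_sig x) (proj1_sig y))
          (fun k x => exist _ (fo I F k (proj1_sig x)) (gF_op F l k _ (proj2_sig x))) : Str I).
  set (f := fun x : C => exist (fun y => y < fn I F) (proj1_sig x) (genF_lt F l _ Hl (proj2_sig x)) : strF I F).
  set (g := fun x : C => exist (fun y => y < fn I B) (e (proj1_sig x)) (e1 _ (proj2_sig x)) : strF I B).
  assert (ef : emb f).
  { split; [|split; [|split]].
    - intros [x px] [y py] E. apply sig_eq. apply (f_equal (@proj1_sig _ _)) in E. exact E.
    - intros [x px] [y py]; simpl; tauto.
    - intros [x px] [y py]; simpl; tauto.
    - intros k [x px]. apply sig_eq; simpl; auto. }
  assert (eg : emb g).
  { split; [|split; [|split]].
    - intros [x px] [y py] E. apply sig_eq. apply (f_equal (@proj1_sig _ _)) in E. simpl in E. apply e2; auto.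
    - intros [x px] [y py]; simpl; auto.
    - intros [x px] [y py]; simpl; auto.
    - intros k [x px]. apply sig_eq; simpl; auto. }
  assert (KC : K C) by (exact (Kher _ _ f KF ef)).
  destruct (Kap (strF I F) (strF I B) C f g KF KB KC ef eg) as (D & i & j & KD & ei & ej & comm).
  exists (F' I F B D i j). split; [|split].
  - exact (Ext_F' I F B D i j ei).
  - exact (Kher _ _ _ KD (hD_emb I F B D i j ei ej)).
  - exists (code I F B D i j). split. exact (code_emb I F B D i j ei ej).
    intros x gx. apply (code_comm I F B D i j ei x (genF_lt F l _ Hl gx) _ (e1 _ gx)).
    pose proof (comm (exist _ x gx)) as E. exact E.
Qed.

Definition step (F : FS I) (t : Task) : FS I :=
  match t as t0 return t = t0 -> FS I with (c, l, le) => fun Et =>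
  match emi (Valid F (c, l, le)) with
  | left h => proj1_sig (cid _ _ (amal_exists F c l le h))
  | right _ => F end end eq_refl.

Lemma step_spec F c l le : Valid F (c, l, le) ->
  Ext F (step F (c, l, le)) /\ K (strF I (step F (c, l, le))) /\
  exists bm, EmbN I (decode I lI HlI c) (step F (c, l, le)) bm /\
    forall x, genF F l x -> bm (lookup le x) = x.
Proof.
  intros h. unfold step. destruct (emi (Valid F (c, l, le))) as [h'|h']; [|contradiction].
  destruct (cid _ _ (amal_exists F c l le h')) as [F' HF']; simpl. exact HF'.
Qed.

Lemma step_ext F t : K (strF I F) -> Ext F (step F t) /\ K (strF I (step F t)).
Proof.
  intros KF. destruct t as [[c l] le].
  destruct (classic (Valid F (c, l, le))) as [h|h].
  - destruct (step_spec F c l le h) as (a&b&_). auto.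
  - unfold step. destruct (emi (Valid F (c, l, le))) as [h'|h']; [contradiction|]. split; auto. apply Ext_refl.
Qed.

Definition enCode : enum Code :=
  enum_prod (enum_prod (enum_prod enum_nat (enum_list (enum_prod enum_nat enum_nat)))
                       (enum_list (enum_prod enum_nat enum_nat))) (enum_list (enum_list enum_nat)).
Definition enTask : enum Task :=
  enum_prod (enum_prod enCode (enum_list enum_nat)) (enum_list (enum_prod enum_nat enum_nat)).

Definition tsk (k : nat) : Task := proj1_sig enTask (fst (Cantor.of_nat k)).

Lemma tsk_often t N : exists k, N <= k /\ tsk k = t.
Proof.
  destruct (proj2_sig enTask t) as [n Hn]. exists (Cantor.to_nat (n, N)). split.
  - pose proof (Cantor.to_nat_non_decreasing n N). lia.
  - unfold tsk. rewrite Cantor.cancel_of_to. simpl. auto.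
Qed.

Definition F0 : FS I := {| fn := 0; fr := fun _ _ => False; fs := fun _ _ => False; fo := fun _ x => x;
  fo_ok := fun _ _ h => h |}.

Fixpoint Fk (k : nat) : FS I := match k with 0 => F0 | S k => step (Fk k) (tsk k) end.

Lemma Fk_K k : K (strF I (Fk k)).
Proof.
  induction k as [|k IH].
  - apply Kempty. intros [x px]. simpl in px. lia.
  - exact (proj2 (step_ext (Fk k) (tsk k) IH)).
Qed.

Lemma Fk_ext k k' : k <= k' -> Ext (Fk k) (Fk k').
Proof.
  induction 1. apply Ext_refl. eapply Ext_trans; eauto. exact (proj1 (step_ext (Fk m) (tsk m) (Fk_K m))).
Qed.

Lemma Fk_mono k k' x : k <= k' -> x < fn I (Fk k) -> x < fn I (Fk k').
Proof. intros H1 H2. destruct (Fk_ext k k' H1) as (a&_). lia. Qed.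

Definition Mc : Type := {x : nat | exists k, x < fn I (Fk k)}.

Definition MR (x y : Mc) : Prop :=
  exists k, proj1_sig x < fn I (Fk k) /\ proj1_sig y < fn I (Fk k) /\ fr I (Fk k) (proj1_sig x) (proj1_sig y).
Definition MS (x y : Mc) : Prop :=
  exists k, proj1_sig x < fn I (Fk k) /\ proj1_sig y < fn I (Fk k) /\ fs I (Fk k) (proj1_sig x) (proj1_sig y).

Definition Mop (i : I) (x : Mc) : Mc :=
  let k := proj1_sig (cid _ _ (proj2_sig x)) in
  exist _ (fo I (Fk k) i (proj1_sig x)) (ex_intro _ k (fo_ok I (Fk k) i _ (proj2_sig (cid _ _ (proj2_sig x))))).

Definition M : Str I := mkStr Mc MR MS Mop.

Lemma Ext_rel k k' x y : x < fn I (Fk k) -> y < fn I (Fk k) -> x < fn I (Fk k') -> y < fn I (Fk k') ->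
  (fr I (Fk k) x y <-> fr I (Fk k') x y) /\ (fs I (Fk k) x y <-> fs I (Fk k') x y).
Proof.
  intros. destruct (le_ge_dec k k') as [h|h].
  - destruct (Fk_ext k k' h) as (_&b&_). apply b; auto.
  - destruct (Fk_ext k' k h) as (_&b&_). destruct (b x y); auto. tauto.
Qed.

Lemma Ext_op k k' i x : x < fn I (Fk k) -> x < fn I (Fk k') -> fo I (Fk k) i x = fo I (Fk k') i x.
Proof.
  intros. destruct (le_ge_dec k k') as [h|h].
  - destruct (Fk_ext k k' h) as (_&_&c). rewrite c; auto.
  - destruct (Fk_ext k' k h) as (_&_&c). rewrite c; auto.
Qed.

Lemma MR_iff k (x y : Mc) : proj1_sig x < fn I (Fk k) -> proj1_sig y < fn I (Fk k) ->
  (MR x y <-> fr I (Fk k) (proj1_sig x) (proj1_sig y)).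
Proof.
  intros hx hy. split.
  - intros (k'&h1&h2&h3). apply (Ext_rel k' k); auto.
  - intros h. exists k; auto.
Qed.
Lemma MS_iff k (x y : Mc) : proj1_sig x < fn I (Fk k) -> proj1_sig y < fn I (Fk k) ->
  (MS x y <-> fs I (Fk k) (proj1_sig x) (proj1_sig y)).
Proof.
  intros hx hy. split.
  - intros (k'&h1&h2&h3). apply (Ext_rel k' k); auto.
  - intros h. exists k; auto.
Qed.
Lemma Mop_val k i (x : Mc) : proj1_sig x < fn I (Fk k) -> proj1_sig (Mop i x) = fo I (Fk k) i (proj1_sig x).
Proof.
  intros h. unfold Mop. destruct (cid _ _ (proj2_sig x)) as [k' h']; simpl. apply Ext_op; auto.
Qed.

Definition iota (k : nat) (x : strF I (Fk k)) : M := exist _ (proj1_sig x) (ex_intro _ k (proj2_sig x)).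

Lemma iota_emb k : emb (iota k).
Proof.
  split; [|split; [|split]].
  - intros [x px] [y py] E. apply sig_eq. apply (f_equal (@proj1_sig _ _)) in E. exact E.
  - intros [x px] [y py]. simpl. rewrite (MR_iff k); simpl; auto. tauto.
  - intros [x px] [y py]. simpl. rewrite (MS_iff k); simpl; auto. tauto.
  - intros i [x px]. apply sig_eq. simpl. symmetry. apply (Mop_val k i (iota k (exist _ x px))). auto.
Qed.

Lemma list_bound (l : list M) : exists k, forall x, In x l -> proj1_sig x < fn I (Fk k).
Proof.
  induction l as [|a r IH]. exists 0; simpl; tauto.
  destruct IH as [k Hk]. destruct (proj2_sig a) as [k' Hk'].
  exists (max k k'). intros x [<-|Hx].
  - eapply Fk_mono; [|exact Hk']. lia.
  - eapply Fk_mono; [|apply Hk; auto]. lia.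
Qed.

Lemma gen_genF k (lx : list M) : (forall x, In x lx -> proj1_sig x < fn I (Fk k)) ->
  forall x : M, gen M lx x -> genF (Fk k) (map (@proj1_sig _ _) lx) (proj1_sig x) /\ proj1_sig x < fn I (Fk k).
Proof.
  intros H x G. induction G as [x Hx|i x G [IH1 IH2]].
  - split; auto. apply gF_base. apply in_map; auto.
  - change (op M i x) with (Mop i x). rewrite (Mop_val k); auto. split. apply gF_op; auto. apply fo_ok; auto.
Qed.

Lemma genF_gen k (lx : list M) : (forall x, In x lx -> proj1_sig x < fn I (Fk k)) ->
  forall y, genF (Fk k) (map (@proj1_sig _ _) lx) y -> exists x : M, proj1_sig x = y /\ gen M lx x.
Proof.
  intros H y G. induction G as [y Hy|i y G [x [<- Gx]]].
  - apply in_map_iff in Hy. destruct Hy as [x [<- Hx]]. exists x; split; auto. apply gen_base; auto.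
  - exists (Mop i x). split. apply (Mop_val k). apply (gen_genF k lx H x Gx). apply gen_op; auto.
Qed.


Lemma inX_lt (X : substr M) lx k : (forall x, sp X x <-> gen M lx x) ->
  (forall x, In x lx -> proj1_sig x < fn I (Fk k)) ->
  forall xx : induced X, proj1_sig (proj1_sig xx) < fn I (Fk k) /\ genF (Fk k) (map (@proj1_sig _ _) lx) (proj1_sig (proj1_sig xx)).
Proof.
  intros HX Hk [x px]. simpl. apply HX in px. destruct (gen_genF k lx Hk x px); auto.
Qed.

Theorem EP (X : substr M) (lx : list M) : (forall x, sp X x <-> gen M lx x) ->
  forall B : Str I, finite_type B -> K B -> forall e : induced X -> B, emb e ->
  exists h : B -> M, emb h /\ forall x, h (e x) = proj1_sig x.
Proof.
  intros HX B finB KB e (einj&eR&eS&eop).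
  destruct (list_bound lx) as [k0 Hk0]. set (l := map (@proj1_sig _ _) lx).
  destruct (code_of_finite I lI HlI B finB) as [c [phi isophi]].
  destruct (iso_inv phi isophi) as [psi [(pinj&pR&pS&pop) [phipsi psiphi]]].
  assert (KBc : K (strF I (decode I lI HlI c))) by exact (Kher _ _ phi KB (proj1 isophi)).
  set (E := fun y => match emi (exists x : induced X, proj1_sig (proj1_sig x) = y) with
                     | left h => proj1_sig (psi (e (proj1_sig (cid _ _ h)))) | right _ => 0 end).
  assert (vv_inj : forall xx xx' : induced X, proj1_sig (proj1_sig xx) = proj1_sig (proj1_sig xx') -> xx = xx').
  { intros xx xx' H. apply sig_eq, sig_eq. exact H. }
  assert (E_spec : forall xx : induced X, E (proj1_sig (proj1_sig xx)) = proj1_sig (psi (e xx))).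
  { intros xx. unfold E. destruct (emi _) as [h|h].
    - destruct (cid _ _ h) as [xx' H']; simpl. rewrite (vv_inj xx' xx H'). auto.
    - exfalso; apply h; eauto. }
  set (le := map (fun y => (y, E y)) (seq 0 (fn I (Fk k0)))).
  assert (L : forall xx : induced X, lookup le (proj1_sig (proj1_sig xx)) = proj1_sig (psi (e xx))).
  { intros xx. unfold le. rewrite lookup_map'. apply E_spec. destruct (inX_lt X lx k0 HX Hk0 xx); lia. }
  destruct (tsk_often (c, l, le) k0) as [k [Hk Ht]].
  assert (Hkl : forall x, In x lx -> proj1_sig x < fn I (Fk k)) by (intros; eapply Fk_mono; eauto).
  assert (G : forall y, genF (Fk k) l y -> exists xx : induced X, proj1_sig (proj1_sig xx) = y).
  { intros y gy. destruct (genF_gen k lx Hkl y gy) as [x [<- gx]]. apply HX in gx. exists (exist _ x gx); auto. }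
  assert (V : Valid (Fk k) (c, l, le)).
  { split; [apply Fk_K|split; [exact KBc|split]].
    - intros y Hy. unfold l in Hy. apply in_map_iff in Hy. destruct Hy as [x [<- Hx]]. auto.
    - split; [|split; [|split; [|split]]].
      + intros y gy. destruct (G y gy) as [xx <-]. rewrite L. apply proj2_sig.
      + intros y y' gy gy'. destruct (G y gy) as [xx <-]. destruct (G y' gy') as [xx' <-].
        rewrite !L. intros H. apply sig_eq in H. apply (f_equal phi) in H. rewrite !phipsi in H.
        apply einj in H. subst; auto.
      + intros y y' gy gy'. destruct (G y gy) as [xx <-]. destruct (G y' gy') as [xx' <-].
        rewrite !L. destruct (inX_lt X lx k HX Hkl xx), (inX_lt X lx k HX Hkl xx').
        rewrite <- (MR_iff k (proj1_sig xx) (proj1_sig xx')) by auto.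
        change (MR (proj1_sig xx) (proj1_sig xx')) with (rR (induced X) xx xx').
        rewrite eR, pR. simpl. tauto.
      + intros y y' gy gy'. destruct (G y gy) as [xx <-]. destruct (G y' gy') as [xx' <-].
        rewrite !L. destruct (inX_lt X lx k HX Hkl xx), (inX_lt X lx k HX Hkl xx').
        rewrite <- (MS_iff k (proj1_sig xx) (proj1_sig xx')) by auto.
        change (MS (proj1_sig xx) (proj1_sig xx')) with (rS (induced X) xx xx').
        rewrite eS, pS. simpl. tauto.
      + intros i y gy. destruct (G y gy) as [xx <-].
        destruct (inX_lt X lx k HX Hkl xx) as [h1 h2].
        assert (Ev : proj1_sig (proj1_sig (op (induced X) i xx)) = fo I (Fk k) i (proj1_sig (proj1_sig xx))).
        { simpl. apply (Mop_val k). auto. }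
        rewrite <- Ev, !L, eop, pop. simpl. auto. }
  destruct (step_spec (Fk k) c l le V) as (_&_&bm&Ebm&Hbm).
  assert (EF : Fk (S k) = step (Fk k) (c, l, le)) by (change (Fk (S k)) with (step (Fk k) (tsk k)); rewrite Ht; auto).
  rewrite <- EF in Ebm.
  exists (fun b => iota (S k) (liftN I _ _ bm (proj1 Ebm) (psi b))). split.
  - apply (emb_comp psi (fun z => iota (S k) (liftN I _ _ bm (proj1 Ebm) z))); [split; auto|].
    apply (emb_comp _ (iota (S k))). apply liftN_emb. apply iota_emb.
  - intros xx. apply sig_eq. simpl. rewrite <- L. apply Hbm.
    destruct (inX_lt X lx k HX Hkl xx); auto.
Qed.


Lemma gen_nil (x : M) : gen M [] x -> False.
Proof. induction 1; simpl in *; auto. Qed.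

Lemma gen_sub (l l' : list M) z : (forall a, In a l -> In a l') -> gen M l z -> gen M l' z.
Proof. intros H G; induction G. apply gen_base; auto. apply gen_op; auto. Qed.

Lemma fg_finite (X : substr M) lx : (forall x, sp X x <-> gen M lx x) -> finite_type (induced X).
Proof.
  intros HX. destruct (list_bound lx) as [k0 Hk0].
  apply (finite_inj (fun xx : induced X => proj1_sig (proj1_sig xx)) (seq 0 (fn I (Fk k0)))).
  - intros xx. apply in_seq. destruct (inX_lt X lx k0 HX Hk0 xx). lia.
  - intros xx xx' H. apply sig_eq, sig_eq. exact H.
Qed.

Lemma fg_K (X : substr M) lx : (forall x, sp X x <-> gen M lx x) -> K (induced X).
Proof.
  intros HX. destruct (list_bound lx) as [k0 Hk0].
  apply (Kher (strF I (Fk k0)) (induced X)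
    (fun xx => exist _ (proj1_sig (proj1_sig xx)) (proj1 (inX_lt X lx k0 HX Hk0 xx)))).
  apply Fk_K.
  split; [|split; [|split]].
  - intros xx xx' H. apply (f_equal (@proj1_sig _ _)) in H. simpl in H. apply sig_eq, sig_eq. exact H.
  - intros xx xx'. simpl. apply MR_iff; apply (inX_lt X lx k0 HX Hk0).
  - intros xx xx'. simpl. apply MS_iff; apply (inX_lt X lx k0 HX Hk0).
  - intros i xx. apply sig_eq. simpl. apply (Mop_val k0). apply (inX_lt X lx k0 HX Hk0).
Qed.

Theorem M_age : age_is M (finite_mem K).
Proof.
  intros N. split.
  - intros [KN finN].
    set (X0 := {| sp := fun _ : M => False; sp_closed := fun _ _ h => h |} : substr M).
    assert (HX0 : forall x, sp X0 x <-> gen M [] x) by (intros x; split; [simpl; tauto|apply gen_nil]).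
    destruct (EP X0 [] HX0 N finN KN (fun xx => False_rect _ (proj2_sig xx))) as [h [eh _]].
    { split; [|split; [|split]]; [intros [? []]|intros [? []]|intros [? []]|intros ? [? []]]. }
    assert (cl : forall i x, (exists n, h n = x) -> exists n, h n = op M i x).
    { intros i x [n <-]. exists (op N i n). apply eh. }
    set (X := {| sp := fun x => exists n, h n = x; sp_closed := cl |} : substr M).
    exists X. destruct finN as [lN HlN]. split.
    + exists (map h lN). intros x; simpl; split.
      * intros [n <-]. apply gen_base. apply in_map; auto.
      * intros G. induction G as [x Hx|i x G IH].
        -- apply in_map_iff in Hx. destruct Hx as [n [<- _]]. eauto.
        -- apply cl; auto.
    + exists (fun n => exist _ (h n) (ex_intro _ n eq_refl) : induced X).
      destruct eh as (hinj&hR&hS&hop). split; [split; [|split; [|split]]|].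
      * intros n n' E. apply (f_equal (@proj1_sig _ _)) in E. auto.
      * intros n n'. simpl. auto.
      * intros n n'. simpl. auto.
      * intros i n. apply sig_eq. simpl. auto.
      * intros [x [n <-]]. exists n. apply sig_eq. auto.
  - intros [X [[lx HX] [h isoh]]]. split.
    + apply (Kher _ _ h (fg_K X lx HX) (proj1 isoh)).
    + destruct (fg_finite X lx HX) as [lX HlX].
      apply (finite_inj h lX); auto. apply isoh.
Qed.

Theorem M_countable : countable M.
Proof. exists (fun x => proj1_sig x). intros x y H. apply sig_eq; auto. Qed.

Definition Inv (l1 l2 : list M) (phi psi : M -> M) : Prop :=
  (forall x, gen M l1 x -> gen M l2 (phi x) /\ psi (phi x) = x) /\
  (forall y, gen M l2 y -> gen M l1 (psi y) /\ phi (psi y) = y) /\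
  (forall x y, gen M l1 x -> gen M l1 y -> (rR M x y <-> rR M (phi x) (phi y)) /\ (rS M x y <-> rS M (phi x) (phi y))) /\
  (forall i x, gen M l1 x -> phi (op M i x) = op M i (phi x)).

Lemma Inv_sym l1 l2 phi psi : Inv l1 l2 phi psi -> Inv l2 l1 psi phi.
Proof.
  intros (i1&i2&i3&i4). split; [auto|split; [auto|split]].
  - intros x y gx gy. destruct (i2 x gx) as [a1 a2], (i2 y gy) as [b1 b2].
    destruct (i3 _ _ a1 b1) as [c1 c2]. rewrite a2, b2 in c1, c2. tauto.
  - intros i y gy. destruct (i2 y gy) as [a1 a2].
    assert (g1 : gen M l1 (psi (op M i y))) by (apply i2, gen_op; auto).
    assert (g2 : gen M l1 (op M i (psi y))) by (apply gen_op; auto).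
    rewrite <- (proj2 (i1 _ g1)), <- (proj2 (i1 _ g2)). f_equal.
    rewrite (proj2 (i2 _ (gen_op i gy))), i4, a2; auto.
Qed.

Definition genS (l : list M) : substr M := {| sp := gen M l; sp_closed := fun i x h => @gen_op _ M l i x h |}.

Lemma forth l1 l2 phi psi x : Inv l1 l2 phi psi ->
  exists l2' phi' psi', Inv (x :: l1) l2' phi' psi' /\ forall z, gen M l1 z -> phi' z = phi z.
Proof.
  intros Hinv. pose proof (Inv_sym _ _ _ _ Hinv) as (j1&j2&j3&j4).
  destruct Hinv as (i1&i2&i3&i4).
  set (Xp := genS (x :: l1)). set (B := induced Xp).
  assert (HXp : forall z, sp Xp z <-> gen M (x :: l1) z) by (intros; simpl; tauto).
  assert (sub : forall z, gen M l1 z -> gen M (x :: l1) z) by (intros; eapply gen_sub; [|eauto]; simpl; auto).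
  set (Y := genS l2).
  set (e := fun yy : induced Y => exist _ (psi (proj1_sig yy)) (sub _ (proj1 (i2 _ (proj2_sig yy)))) : B).
  assert (ee : emb e).
  { split; [|split; [|split]].
    - intros [y py] [y' py'] E. apply (f_equal (@proj1_sig _ _)) in E. simpl in E.
      apply sig_eq. simpl. rewrite <- (proj2 (i2 y py)), <- (proj2 (i2 y' py')), E. auto.
    - intros [y py] [y' py']. simpl. apply j3; auto.
    - intros [y py] [y' py']. simpl. apply j3; auto.
    - intros i [y py]. apply sig_eq. simpl. apply j4. auto. }
  destruct (EP Y l2 (fun z => conj (fun h => h) (fun h => h)) B (fg_finite Xp _ HXp) (fg_K Xp _ HXp) e ee)
    as [g [(ginj&gR&gS&gop) ge]].
  set (phi' := fun z => match emi (gen M (x :: l1) z) with left p => g (exist _ z p) | right _ => z end).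
  assert (phs : forall z (p : gen M (x :: l1) z), phi' z = g (exist _ z p)).
  { intros z p. unfold phi'. destruct (emi _) as [p'|p']; [|contradiction]. f_equal. apply sig_eq; auto. }
  assert (phop : forall i z, gen M (x :: l1) z -> phi' (op M i z) = op M i (phi' z)).
  { intros i z p. rewrite (phs _ (@gen_op _ M _ i z p)), (phs _ p), <- gop. f_equal. }
  assert (phinj : forall z z', gen M (x :: l1) z -> gen M (x :: l1) z' -> phi' z = phi' z' -> z = z').
  { intros z z' p p' E. rewrite (phs _ p), (phs _ p') in E. apply ginj in E.
    apply (f_equal (@proj1_sig _ _)) in E. exact E. }
  set (l2' := map phi' (x :: l1)).
  assert (img1 : forall z, gen M (x :: l1) z -> gen M l2' (phi' z)).
  { intros z G. induction G as [z Hz|i z G IH].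
    - apply gen_base. apply in_map; auto.
    - rewrite phop; auto. apply gen_op; auto. }
  assert (img2 : forall w, gen M l2' w -> exists z, gen M (x :: l1) z /\ phi' z = w).
  { intros w G. induction G as [w Hw|i w G [z [gz <-]]].
    - apply in_map_iff in Hw. destruct Hw as [z [<- Hz]]. exists z. split; auto. apply gen_base; auto.
    - exists (op M i z). split. apply gen_op; auto. apply phop; auto. }
  set (psi' := fun w => match emi (exists z, gen M (x :: l1) z /\ phi' z = w) with
                        | left h => proj1_sig (cid _ _ h) | right _ => w end).
  assert (pss : forall w, gen M l2' w -> gen M (x :: l1) (psi' w) /\ phi' (psi' w) = w).
  { intros w G. unfold psi'. destruct (emi _) as [h|h].
    - destruct (cid _ _ h) as [z [gz Ez]]; simpl; auto.
    - exfalso. apply h. apply img2; auto. }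
  exists l2', phi', psi'. split; [split; [|split; [|split]]|].
  - intros z gz. split; auto. destruct (pss (phi' z) (img1 z gz)) as [a b]. apply phinj; auto.
  - auto.
  - intros z z' p p'. rewrite (phs _ p), (phs _ p'). split.
    + apply (gR (exist _ z p) (exist _ z' p')).
    + apply (gS (exist _ z p) (exist _ z' p')).
  - auto.
  - intros z gz. rewrite (phs _ (sub _ gz)).
    destruct (i1 z gz) as [a b].
    transitivity (g (e (exist (fun w => sp Y w) (phi z) a))).
    + f_equal. apply sig_eq. simpl. auto.
    + apply ge.
Qed.

Lemma Inv_ext a b phi psi a' b' phi' psi' : Inv a b phi psi -> Inv a' b' phi' psi' ->
  (forall z, gen M a z -> gen M a' z /\ phi' z = phi z) ->
  (forall w, gen M b w -> gen M b' w /\ psi' w = psi w).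
Proof.
  intros (i1&i2&_) (i1'&i2'&_) H w gw.
  destruct (i2 w gw) as [gz Ez]. destruct (H _ gz) as [gz' Ez'].
  rewrite <- Ez, <- Ez'. destruct (i1' _ gz') as [p q]. split; auto. rewrite q. rewrite Ez', Ez. auto.
Qed.

Record St := { sl1 : list M; sl2 : list M; sphi : M -> M; spsi : M -> M }.
Definition InvR (s : St) := Inv (sl1 s) (sl2 s) (sphi s) (spsi s).
Definition ExtR (s s' : St) :=
  (forall z, gen M (sl1 s) z -> gen M (sl1 s') z /\ sphi s' z = sphi s z) /\
  (forall w, gen M (sl2 s) w -> gen M (sl2 s') w /\ spsi s' w = spsi s w).
Definition swap (s : St) : St := {| sl1 := sl2 s; sl2 := sl1 s; sphi := spsi s; spsi := sphi s |}.

Lemma ExtR_trans s1 s2 s3 : ExtR s1 s2 -> ExtR s2 s3 -> ExtR s1 s3.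
Proof.
  intros (a1&b1) (a2&b2). split.
  - intros z gz. destruct (a1 z gz) as [p q]. destruct (a2 z p) as [p' q']. split; auto. congruence.
  - intros z gz. destruct (b1 z gz) as [p q]. destruct (b2 z p) as [p' q']. split; auto. congruence.
Qed.
Lemma ExtR_refl s : ExtR s s.
Proof. split; auto. Qed.

Lemma forth_k s k : InvR s -> exists s', InvR s' /\ ExtR s s' /\ forall x : M, proj1_sig x = k -> gen M (sl1 s') x.
Proof.
  intros H. destruct (classic (exists x : M, proj1_sig x = k)) as [[x Hx]|N].
  - destruct (forth _ _ _ _ x H) as (l2'&phi'&psi'&Hi&He).
    exists {| sl1 := x :: sl1 s; sl2 := l2'; sphi := phi'; spsi := psi' |}.
    assert (A : forall z, gen M (sl1 s) z -> gen M (x :: sl1 s) z /\ phi' z = sphi s z).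
    { intros z gz. split; auto. eapply gen_sub; [|eauto]; simpl; auto. }
    split; auto. split. split; auto. exact (Inv_ext _ _ _ _ _ _ _ _ H Hi A).
    intros y Hy. simpl. assert (y = x) as -> by (apply sig_eq; congruence). apply gen_base; simpl; auto.
  - exists s. split; auto. split. apply ExtR_refl. intros x Hx; exfalso; eauto.
Qed.

Lemma both_k s k : InvR s -> exists s', InvR s' /\ ExtR s s' /\
  (forall x : M, proj1_sig x = k -> gen M (sl1 s') x) /\ (forall x : M, proj1_sig x = k -> gen M (sl2 s') x).
Proof.
  intros H. destruct (forth_k s k H) as (s1&H1&E1&F1).
  destruct (forth_k (swap s1) k (Inv_sym _ _ _ _ H1)) as (s2&H2&E2&F2).
  exists (swap s2). split; [apply Inv_sym; exact H2|split; [|split]].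
  - eapply ExtR_trans; [exact E1|]. destruct E2 as [a b]. split; auto.
  - intros x Hx. destruct E2 as [_ b]. apply b. apply F1; auto.
  - auto.
Qed.

Definition SS := {s : St | InvR s}.
Definition nxt (s : SS) (k : nat) : SS :=
  exist _ (proj1_sig (cid _ _ (both_k (proj1_sig s) k (proj2_sig s))))
          (proj1 (proj2_sig (cid _ _ (both_k (proj1_sig s) k (proj2_sig s))))).
Lemma nxt_spec s k : ExtR (proj1_sig s) (proj1_sig (nxt s k)) /\
  (forall x : M, proj1_sig x = k -> gen M (sl1 (proj1_sig (nxt s k))) x) /\
  (forall x : M, proj1_sig x = k -> gen M (sl2 (proj1_sig (nxt s k))) x).
Proof. unfold nxt; simpl. destruct (cid _ _ _) as [s' Hs']; simpl. tauto. Qed.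

Theorem M_ultra : ultrahomogeneous M.
Proof.
  intros X Y [lX HX] [lY HY] h isoh.
  destruct (iso_inv h isoh) as [h' [(h'inj&h'R&h'S&h'op) [hh' h'h]]].
  destruct isoh as ((hinj&hR&hS&hop)&_).
  set (phi0 := fun z => match emi (sp X z) with left p => proj1_sig (h (exist _ z p)) | right _ => z end).
  set (psi0 := fun w => match emi (sp Y w) with left p => proj1_sig (h' (exist _ w p)) | right _ => w end).
  assert (ph0 : forall z (p : sp X z), phi0 z = proj1_sig (h (exist _ z p))).
  { intros z p. unfold phi0. destruct (emi _); [|contradiction]. do 2 f_equal. apply sig_eq; auto. }
  assert (ps0 : forall w (p : sp Y w), psi0 w = proj1_sig (h' (exist _ w p))).
  { intros w p. unfold psi0. destruct (emi _); [|contradiction]. do 2 f_equal. apply sig_eq; auto. }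
  assert (I0 : Inv lX lY phi0 psi0).
  { split; [|split; [|split]].
    - intros x gx. apply HX in gx. rewrite (ph0 x gx). split.
      + apply HY. apply proj2_sig.
      + rewrite (ps0 _ (proj2_sig (h (exist _ x gx)))).
        replace (exist _ (proj1_sig (h (exist _ x gx))) _) with (h (exist _ x gx)) by (apply sig_eq; auto).
        rewrite h'h. auto.
    - intros y gy. apply HY in gy. rewrite (ps0 y gy). split.
      + apply HX. apply proj2_sig.
      + rewrite (ph0 _ (proj2_sig (h' (exist _ y gy)))).
        replace (exist _ (proj1_sig (h' (exist _ y gy))) _) with (h' (exist _ y gy)) by (apply sig_eq; auto).
        rewrite hh'. auto.
    - intros x y gx gy. apply HX in gx. apply HX in gy. rewrite (ph0 x gx), (ph0 y gy). split.
      + apply (hR (exist _ x gx) (exist _ y gy)).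
      + apply (hS (exist _ x gx) (exist _ y gy)).
    - intros i x gx. apply HX in gx. rewrite (ph0 x gx), (ph0 _ (sp_closed X i x gx)).
      exact (f_equal (@proj1_sig _ _) (hop i (exist _ x gx))). }
  set (s0 := exist _ {| sl1 := lX; sl2 := lY; sphi := phi0; spsi := psi0 |} I0 : SS).
  set (st := fix st k := match k with 0 => s0 | S k => nxt (st k) k end).
  assert (stS : forall k, st (S k) = nxt (st k) k) by reflexivity.
  assert (stE : forall k k', k <= k' -> ExtR (proj1_sig (st k)) (proj1_sig (st k'))).
  { induction 1. apply ExtR_refl. eapply ExtR_trans; [eauto|]. rewrite stS. apply nxt_spec. }
  assert (in1 : forall x : M, gen M (sl1 (proj1_sig (st (S (proj1_sig x))))) x).
  { intros x. rewrite stS. apply nxt_spec. auto. }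
  assert (in2 : forall x : M, gen M (sl2 (proj1_sig (st (S (proj1_sig x))))) x).
  { intros x. rewrite stS. apply nxt_spec. auto. }
  set (s := fun x : M => sphi (proj1_sig (st (S (proj1_sig x)))) x).
  assert (sk : forall k x, gen M (sl1 (proj1_sig (st k))) x -> s x = sphi (proj1_sig (st k)) x).
  { intros k x gx. unfold s. set (k1 := S (proj1_sig x)).
    destruct (stE k (max k k1) ltac:(lia)) as [a _]. destruct (stE k1 (max k k1) ltac:(lia)) as [b _].
    destruct (a x gx) as [_ E1]. destruct (b x (in1 x)) as [_ E2]. congruence. }
  assert (gmono : forall k k' x, k <= k' -> gen M (sl1 (proj1_sig (st k))) x -> gen M (sl1 (proj1_sig (st k'))) x).
  { intros k k' x H G. apply (stE k k' H); auto. }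
  exists s. split; [split; [split; [|split; [|split]]|]|].
  - intros x y E. set (m := max (S (proj1_sig x)) (S (proj1_sig y))).
    assert (gx : gen M (sl1 (proj1_sig (st m))) x) by (apply (gmono (S (proj1_sig x))); [lia|auto]).
    assert (gy : gen M (sl1 (proj1_sig (st m))) y) by (apply (gmono (S (proj1_sig y))); [lia|auto]).
    rewrite (sk m x gx), (sk m y gy) in E. destruct (proj2_sig (st m)) as (i1&_).
    rewrite <- (proj2 (i1 x gx)), <- (proj2 (i1 y gy)), E. auto.
  - intros x y. set (m := max (S (proj1_sig x)) (S (proj1_sig y))).
    assert (gx : gen M (sl1 (proj1_sig (st m))) x) by (apply (gmono (S (proj1_sig x))); [lia|auto]).
    assert (gy : gen M (sl1 (proj1_sig (st m))) y) by (apply (gmono (S (proj1_sig y))); [lia|auto]).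
    rewrite (sk m x gx), (sk m y gy). destruct (proj2_sig (st m)) as (_&_&i3&_). apply i3; auto.
  - intros x y. set (m := max (S (proj1_sig x)) (S (proj1_sig y))).
    assert (gx : gen M (sl1 (proj1_sig (st m))) x) by (apply (gmono (S (proj1_sig x))); [lia|auto]).
    assert (gy : gen M (sl1 (proj1_sig (st m))) y) by (apply (gmono (S (proj1_sig y))); [lia|auto]).
    rewrite (sk m x gx), (sk m y gy). destruct (proj2_sig (st m)) as (_&_&i3&_). apply i3; auto.
  - intros i x. set (m := S (proj1_sig x)).
    rewrite (sk m x (in1 x)), (sk m (op M i x) (gen_op i (in1 x))).
    destruct (proj2_sig (st m)) as (_&_&_&i4). apply i4. apply in1.
  - intros y. set (m := S (proj1_sig y)). destruct (proj2_sig (st m)) as (_&i2&_).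
    destruct (i2 y (in2 y)) as [a b]. exists (spsi (proj1_sig (st m)) y). rewrite (sk m _ a). auto.
  - intros [x px]. simpl. assert (g0 : gen M (sl1 (proj1_sig (st 0))) x) by (apply HX; auto).
    rewrite (sk 0 x g0). simpl. rewrite (ph0 x px). auto.
Qed.

Theorem Fraisse_exists : exists M, Fraisse_limit (finite_mem K) M.
Proof. exists M. split; [apply M_countable|split; [apply M_ultra|apply M_age]]. Qed.

End Chain.

End XFr4.
Import XFr4.

Module XLg1.

Definition fNot p := fImp p fBot.
Definition fAnd p q := fNot (fImp p (fNot q)).
Definition fOr p q := fImp (fNot p) q.
Definition fEx p := fNot (fAll (fNot p)).
Definition fTop := fImp fBot fBot.

Section Sat.
Variable N : RSStr.
Lemma sat_not e p : sat N e (fNot p) <-> ~ sat N e p. Proof. simpl; tauto. Qed.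
Lemma sat_and e p q : sat N e (fAnd p q) <-> sat N e p /\ sat N e q. Proof. simpl; tauto. Qed.
Lemma sat_or e p q : sat N e (fOr p q) <-> sat N e p \/ sat N e q. Proof. simpl; tauto. Qed.
Lemma sat_ex e p : sat N e (fEx p) <-> exists x, sat N (scons x e) p.
Proof. simpl. split. intros H. apply NNPP. intros H'. apply H. intros x Hx. apply H'. eauto.
  intros [x Hx] H. apply (H x Hx). Qed.

Definition bigAnd (l : list fm) := fold_right fAnd fTop l.
Definition bigOr (l : list fm) := fold_right fOr fBot l.
Lemma sat_bigAnd e l : sat N e (bigAnd l) <-> forall q, In q l -> sat N e q.
Proof.
  induction l as [|a r IH]. simpl. split; [tauto|auto].
  change (bigAnd (a :: r)) with (fAnd a (bigAnd r)). rewrite sat_and, IH.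
  split. intros [h1 h2] q [<-|Hq]; auto. intros H; split; [apply H; simpl; auto|intros q Hq; apply H; simpl; auto].
Qed.
Lemma sat_bigOr e l : sat N e (bigOr l) <-> exists q, In q l /\ sat N e q.
Proof.
  induction l as [|a r IH]. simpl. split; [tauto|intros (q&[]&_)].
  change (bigOr (a :: r)) with (fOr a (bigOr r)). rewrite sat_or, IH. split.
  - intros [h|(q&h1&h2)]. exists a; simpl; auto. exists q; simpl; auto.
  - intros (q&[<-|h1]&h2); eauto.
Qed.
End Sat.

Lemma bound_mono k m p : bound k p -> k <= m -> bound m p.
Proof.
  revert k m; induction p; simpl; intros k' m' H L.
  - destruct H; split; lia.
  - destruct H; split; lia.
  - destruct H; split; lia.
  - auto.
  - destruct H; split; eauto.
  - apply (IHp (S k')); auto; lia.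
Qed.

Lemma bound_ex p : exists n, bound n p.
Proof.
  induction p; simpl.
  - exists (S (max n n0)); lia.
  - exists (S (max n n0)); lia.
  - exists (S (max n n0)); lia.
  - exists 0; auto.
  - destruct IHp1 as [a Ha], IHp2 as [b Hb]. exists (max a b). split; eapply bound_mono; eauto; lia.
  - destruct IHp as [a Ha]. exists a. eapply bound_mono; eauto.
Qed.

Lemma sat_ext N p : forall n e e', bound n p -> (forall i, i < n -> e i = e' i) -> (sat N e p <-> sat N e' p).
Proof.
  induction p; simpl; intros m e e' B H.
  - rewrite !H by tauto. tauto.
  - rewrite !H by tauto. tauto.
  - rewrite !H by tauto. tauto.
  - tauto.
  - destruct B. rewrite (IHp1 m e e'), (IHp2 m e e'); auto. tauto.
  - assert (HH : forall x i, i < S m -> scons x e i = scons x e' i).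
    { intros x [|i] Hi; simpl; auto. apply H; lia. }
    split; intros G x; specialize (G x).
    + exact (proj1 (IHp (S m) (scons x e) (scons x e') B (HH x)) G).
    + exact (proj2 (IHp (S m) (scons x e) (scons x e') B (HH x)) G).
Qed.
Lemma sat_ext' N p n e e' : bound n p -> (forall i, i < n -> e i = e' i) -> sat N e p -> sat N e' p.
Proof. intros B H. apply (sat_ext N p n e e' B H). Qed.

Definition clo (n : nat) (p : fm) : fm := Nat.iter n fAll p.

Lemma clo_bound n p m : bound (m + n) p -> bound m (clo n p).
Proof.
  revert m; induction n as [|n IH]; intros m B; simpl. rewrite Nat.add_0_r in B; auto.
  apply IH. replace (S m + n) with (m + S n) by lia. auto.
Qed.
Lemma clo_bound_inv n p m : bound m (clo n p) -> bound (m + n) p.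
Proof.
  revert m; induction n as [|n IH]; intros m B; simpl in *. rewrite Nat.add_0_r; auto.
  replace (m + S n) with (S m + n) by lia. apply IH. auto.
Qed.
Lemma clo_holds N n p : (forall e, sat N e p) -> forall e, sat N e (clo n p).
Proof. induction n as [|n IH]; simpl; intros H e; auto. Qed.
Lemma scons_eta {T} (e : nat -> T) : scons (e 0) (fun k => e (S k)) = e.
Proof. apply functional_extensionality. intros [|k]; auto. Qed.
Lemma clo_inst N n p : (forall e, sat N e (clo n p)) -> forall e, sat N e p.
Proof.
  induction n as [|n IH]; simpl; auto. intros H. apply IH. intros e.
  rewrite <- (scons_eta e). apply H.
Qed.

Lemma comp_scons {A B} (h : A -> B) x e : (fun n => h (scons x e n)) = scons (h x) (fun n => h (e n)).
Proof. apply functional_extensionality. intros [|k]; auto. Qed.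

Lemma qf_emb (N N' : RSStr) (h : N -> N') : emb h -> forall p, qf p ->
  forall e, sat N e p <-> sat N' (fun n => h (e n)) p.
Proof.
  intros (hinj&hR&hS&_) p. induction p; simpl; intros Q e.
  - apply hR.
  - apply hS.
  - split; [intros E; rewrite E; reflexivity|apply hinj].
  - tauto.
  - destruct Q. rewrite IHp1, IHp2 by auto. tauto.
  - contradiction.
Qed.

Lemma iso_sat (N N' : RSStr) (h : N -> N') : iso h -> forall p e, sat N e p <-> sat N' (fun n => h (e n)) p.
Proof.
  intros [(hinj&hR&hS&_) hs] p. induction p; simpl; intros e.
  - apply hR.
  - apply hS.
  - split; [intros E; rewrite E; reflexivity|apply hinj].
  - tauto.
  - rewrite IHp1, IHp2. tauto.
  - split.
    + intros H y. destruct (hs y) as [x <-]. rewrite <- comp_scons. apply IHp. auto.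
    + intros H x. apply IHp. rewrite comp_scons. auto.
Qed.

Definition ats (n : nat) : list fm :=
  flat_map (fun i => flat_map (fun j => [fR i j; fS i j; fEq i j]) (seq 0 n)) (seq 0 n).


Lemma ats_bound n a : In a (ats n) -> bound n a /\ qf a.
Proof.
  unfold ats. rewrite in_flat_map. intros (i&Hi&H). rewrite in_flat_map in H. destruct H as (j&Hj&H).
  apply in_seq in Hi. apply in_seq in Hj. simpl in H. destruct H as [<-|[<-|[<-|[]]]]; simpl; lia.
Qed.
Lemma ats_in n i j : i < n -> j < n -> In (fR i j) (ats n) /\ In (fS i j) (ats n) /\ In (fEq i j) (ats n).
Proof.
  intros Hi Hj. unfold ats. repeat split; apply in_flat_map; exists i; (split; [apply in_seq; lia|]);
  apply in_flat_map; exists j; (split; [apply in_seq; lia|]); simpl; tauto.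
Qed.

Definition agree (N N' : RSStr) (e : nat -> N) (e' : nat -> N') (n : nat) : Prop :=
  forall a, In a (ats n) -> (sat N e a <-> sat N' e' a).

Lemma qf_agree N N' e e' n p : qf p -> bound n p -> agree N N' e e' n -> (sat N e p <-> sat N' e' p).
Proof.
  intros Q B A. revert Q B. induction p; simpl; intros Q B.
  - apply (A (fR n0 n1)). apply ats_in; tauto.
  - apply (A (fS n0 n1)). apply ats_in; tauto.
  - apply (A (fEq n0 n1)). apply ats_in; tauto.
  - tauto.
  - destruct Q, B. rewrite IHp1, IHp2 by auto. tauto.
  - contradiction.
Qed.

Lemma agree_sym N N' e e' n : agree N N' e e' n -> agree N' N e' e n.
Proof. intros A a H. rewrite (A a H); tauto. Qed.

Definition tvb (N : RSStr) (e : nat -> N) (a : fm) : bool := if emi (sat N e a) then true else false.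
Definition lit (a : fm) (b : bool) : fm := if b then a else fNot a.
Definition diagf (n : nat) (bs : list bool) : fm :=
  bigAnd (map (fun ab => lit (fst ab) (snd ab)) (combine (ats n) bs)).
Definition tv (N : RSStr) (e : nat -> N) (n : nat) : list bool := map (tvb N e) (ats n).

Lemma combine_self {A B} (f : A -> B) (l : list A) : combine l (map f l) = map (fun a => (a, f a)) l.
Proof. induction l; simpl; congruence. Qed.

Lemma diag_iff N N' e e' n : sat N' e' (diagf n (tv N e n)) <-> agree N N' e e' n.
Proof.
  unfold diagf, tv. rewrite combine_self, map_map, sat_bigAnd. split.
  - intros H a Ha. specialize (H (lit a (tvb N e a))). simpl in H.
    assert (G : sat N' e' (lit a (tvb N e a))) by (apply H; apply in_map_iff; eauto).
    unfold lit, tvb in G. destruct (emi (sat N e a)); simpl in G; tauto.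
  - intros A q Hq. apply in_map_iff in Hq. destruct Hq as (a&<-&Ha). simpl.
    specialize (A a Ha). unfold lit, tvb. destruct (emi (sat N e a)); simpl; tauto.
Qed.

Lemma bigAnd_qfb n l : (forall q, In q l -> qf q /\ bound n q) -> qf (bigAnd l) /\ bound n (bigAnd l).
Proof.
  induction l as [|a r IH]; simpl; intros H. tauto.
  destruct (H a) as [h1 h2]; [auto|]. destruct IH as [h3 h4]; [intros; apply H; auto|]. tauto.
Qed.
Lemma bigOr_qfb n l : (forall q, In q l -> qf q /\ bound n q) -> qf (bigOr l) /\ bound n (bigOr l).
Proof.
  induction l as [|a r IH]; simpl; intros H. tauto.
  destruct (H a) as [h1 h2]; [auto|]. destruct IH as [h3 h4]; [intros; apply H; auto|]. tauto.
Qed.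
Lemma diag_qfb n bs : qf (diagf n bs) /\ bound n (diagf n bs).
Proof.
  apply bigAnd_qfb. intros q Hq. apply in_map_iff in Hq. destruct Hq as ([a b]&<-&H).
  apply in_combine_l in H. destruct (ats_bound n a H). simpl. destruct b; simpl; tauto.
Qed.

Fixpoint all_bl (k : nat) : list (list bool) :=
  match k with 0 => [[]] | S k => map (cons true) (all_bl k) ++ map (cons false) (all_bl k) end.
Lemma all_bl_in (l : list bool) : In l (all_bl (length l)).
Proof.
  induction l as [|b l IH]; simpl; auto. apply in_or_app. destruct b; [left|right]; apply in_map; auto.
Qed.

End XLg1.
Import XLg1.

Module XLg2.

Lemma gen_rel (M : RSStr) l x : gen M l x <-> In x l.
Proof. split. intros G; destruct G; auto. destruct i. apply gen_base. Qed.

Lemma agree_atoms N N' e e' n i j : agree N N' e e' n -> i < n -> j < n ->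
  (rR N (e i) (e j) <-> rR N' (e' i) (e' j)) /\ (rS N (e i) (e j) <-> rS N' (e' i) (e' j)) /\
  (e i = e j <-> e' i = e' j).
Proof.
  intros A Hi Hj. destruct (ats_in n i j Hi Hj) as (a1&a2&a3).
  split; [apply (A _ a1)|split; [apply (A _ a2)|apply (A _ a3)]].
Qed.

Definition subOf (M : RSStr) (e : nat -> M) (n : nat) : substr M :=
  {| sp := fun x => exists i, i < n /\ e i = x; sp_closed := fun i => match i with end |}.

Lemma subOf_fg M e n : fin_gen (subOf M e n).
Proof.
  exists (map e (seq 0 n)). intros x. rewrite gen_rel, in_map_iff. simpl.
  split; intros (i&h1&h2); exists i; rewrite in_seq in *; split; auto; lia.
Qed.

Section Logic.
Variable K : RSStr -> Prop.
Variable M : RSStr.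
Hypothesis HF : Fraisse_limit (finite_mem K) M.

Lemma ultra_agree e0 e n p : agree M M e0 e n -> bound n p -> sat M e0 p -> sat M e p.
Proof.
  intros A B S0. destruct HF as (_&U&_).
  set (X := subOf M e0 n). set (Y := subOf M e n).
  assert (hex : forall xx : induced X, {y | sp Y y /\ forall i, i < n -> e0 i = proj1_sig xx -> e i = y}).
  { intros [x px]. simpl. destruct (cid _ _ px) as [i [Hi Ei]].
    exists (e i). split. exists i; auto. intros j Hj Ej. apply (agree_atoms _ _ _ _ _ j i A Hj Hi). congruence. }
  set (h := fun xx => exist _ (proj1_sig (hex xx)) (proj1 (proj2_sig (hex xx))) : induced Y).
  assert (hv : forall xx i, i < n -> e0 i = proj1_sig xx -> proj1_sig (h xx) = e i).
  { intros xx i Hi E. simpl. symmetry. apply (proj2 (proj2_sig (hex xx))); auto. }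
  assert (isoh : iso h).
  { split; [split; [|split; [|split]]|].
    - intros [x px] [y py] E. pose proof px as Hx. pose proof py as Hy. simpl in Hx, Hy.
      destruct Hx as (i&Hi&Ei), Hy as (j&Hj&Ej).
      apply (f_equal (@proj1_sig _ _)) in E.
      assert (E' : e i = e j).
      { rewrite <- (hv (exist _ x px) i Hi Ei), <- (hv (exist _ y py) j Hj Ej). exact E. }
      apply sig_eq. simpl. subst x y. apply (agree_atoms _ _ _ _ _ i j A Hi Hj). auto.
    - intros [x px] [y py]. pose proof px as Hx. pose proof py as Hy. simpl in Hx, Hy.
      destruct Hx as (i&Hi&Ei), Hy as (j&Hj&Ej).
      pose proof (hv (exist _ x px) i Hi Ei) as E1. pose proof (hv (exist _ y py) j Hj Ej) as E2.
      simpl in E1, E2 |- *. rewrite E1, E2. subst x y. apply (agree_atoms _ _ _ _ _ i j A Hi Hj).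
    - intros [x px] [y py]. pose proof px as Hx. pose proof py as Hy. simpl in Hx, Hy.
      destruct Hx as (i&Hi&Ei), Hy as (j&Hj&Ej).
      pose proof (hv (exist _ x px) i Hi Ei) as E1. pose proof (hv (exist _ y py) j Hj Ej) as E2.
      simpl in E1, E2 |- *. rewrite E1, E2. subst x y. apply (agree_atoms _ _ _ _ _ i j A Hi Hj).
    - intros [].
    - intros [y (i&Hi&<-)]. exists (exist _ (e0 i) (ex_intro _ i (conj Hi eq_refl)) : induced X).
      apply sig_eq. apply hv; auto. }
  destruct (U X Y (subOf_fg M e0 n) (subOf_fg M e n) h isoh) as [s [isos Hs]].
  assert (se : forall i, i < n -> s (e0 i) = e i).
  { intros i Hi. set (xx := exist (fun x => sp X x) (e0 i) (ex_intro _ i (conj Hi eq_refl)) : induced X).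
    transitivity (proj1_sig (h xx)). exact (Hs xx). apply hv; auto. }
  apply (iso_sat M M s isos p e0) in S0.
  eapply sat_ext'; [exact B| |exact S0]. simpl. auto.
Qed.

Definition goodb n p (bs : list bool) : bool :=
  if emi (exists e0 : nat -> M, tv M e0 n = bs /\ sat M e0 p) then true else false.
Definition qe_psi n p : fm := bigOr (map (diagf n) (filter (goodb n p) (all_bl (length (ats n))))).

Lemma qe_psi_qfb n p : qf (qe_psi n p) /\ bound n (qe_psi n p).
Proof.
  apply bigOr_qfb. intros q Hq. apply in_map_iff in Hq. destruct Hq as (bs&<-&_). apply diag_qfb.
Qed.

Lemma qe_M n p : bound n p -> forall e, sat M e p <-> sat M e (qe_psi n p).
Proof.
  intros B e. unfold qe_psi. rewrite sat_bigOr. split.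
  - intros H. exists (diagf n (tv M e n)). split.
    + apply in_map. apply filter_In. split.
      * unfold tv. replace (length (ats n)) with (length (map (tvb M e) (ats n))) by apply length_map. apply all_bl_in.
      * unfold goodb. destruct (emi _) as [h|h]; auto. exfalso; apply h; eauto.
    + apply diag_iff. intros a _. tauto.
  - intros (q&Hq&Sq). apply in_map_iff in Hq. destruct Hq as (bs&<-&Hbs). apply filter_In in Hbs.
    destruct Hbs as [_ G]. unfold goodb in G. destruct (emi _) as [(e0&E0&S0)|h]; [|discriminate].
    subst bs. apply diag_iff in Sq. eapply ultra_agree; eauto.
Qed.

Definition eqv p q := fAnd (fImp p q) (fImp q p).
Lemma sat_eqv N e p q : sat N e (eqv p q) <-> (sat N e p <-> sat N e q).
Proof. unfold eqv. rewrite sat_and. simpl. tauto. Qed.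

Lemma Th_equiv n p psi : bound n p -> bound n psi -> (forall e, sat M e p <-> sat M e psi) ->
  forall N, model (Th M) N -> forall e, sat N e p <-> sat N e psi.
Proof.
  intros B1 B2 H N [_ HN] e.
  assert (T : Th M (clo n (eqv p psi))).
  { split. apply (clo_bound n _ 0). simpl. unfold eqv, fAnd, fNot. simpl. tauto.
    exact (clo_holds M n _ (fun e' => proj2 (sat_eqv M e' p psi) (H e'))). }
  apply sat_eqv. apply (clo_inst N n). apply HN. exact T.
Qed.

Theorem QE_Th : QE (Th M).
Proof.
  intros n p B. exists (qe_psi n p). destruct (qe_psi_qfb n p) as [Q Bq]. split; auto. split; auto.
  apply (Th_equiv n); auto. apply qe_M; auto.
Qed.

Theorem MC_Th : model_complete (Th M).
Proof.
  intros N N' h HN HN' eh p e. destruct (bound_ex p) as [n B].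
  destruct (QE_Th n p B) as (psi&Q&Bp&H).
  rewrite (H N HN), (H N' HN'). apply qf_emb; auto.
Qed.

Lemma ext_models N N' e e' n y : model (Th M) N -> model (Th M) N' -> agree N N' e e' n ->
  exists y', agree N N' (scons y e) (scons y' e') (S n).
Proof.
  intros HN HN' A.
  set (phi := fEx (diagf (S n) (tv N (scons y e) (S n)))).
  assert (Bphi : bound n phi).
  { unfold phi, fEx, fNot. change ((bound (S n) (diagf (S n) (tv N (scons y e) (S n))) /\ True) /\ True).
    split; [split; [apply diag_qfb|auto]|auto]. }
  destruct (QE_Th n phi Bphi) as (psi&Q&Bp&H).
  assert (S1 : sat N e phi). { unfold phi. apply sat_ex. exists y. apply diag_iff. intros a _; tauto. }
  rewrite (H N HN) in S1. rewrite (qf_agree N N' e e' n psi Q Bp A) in S1. rewrite <- (H N' HN') in S1.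
  unfold phi in S1. apply sat_ex in S1. destruct S1 as [y' Hy']. exists y'. apply diag_iff in Hy'. auto.
Qed.

End Logic.

End XLg2.
Import XLg2.

Module XLg3.

Section Logic2.
Variable K : RSStr -> Prop.
Variable M : RSStr.
Hypothesis HF : Fraisse_limit (finite_mem K) M.

Section BF.
Variables N N' : RSStr.
Hypothesis HN : model (Th M) N.
Hypothesis HN' : model (Th M) N'.
Variable d : N.
Variable d' : N'.

Definition eN (L : list (N * N')) (i : nat) : N := fst (nth i L (d, d')).
Definition eN' (L : list (N * N')) (i : nat) : N' := snd (nth i L (d, d')).
Definition invL (L : list (N * N')) := agree N N' (eN L) (eN' L) (length L).

Lemma eN_cons y y' L : eN ((y, y') :: L) = scons y (eN L).
Proof. apply functional_extensionality; intros [|i]; reflexivity. Qed.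
Lemma eN'_cons y y' L : eN' ((y, y') :: L) = scons y' (eN' L).
Proof. apply functional_extensionality; intros [|i]; reflexivity. Qed.

Lemma fwd L y : invL L -> exists y', invL ((y, y') :: L).
Proof.
  intros H. destruct (ext_models K M HF N N' (eN L) (eN' L) (length L) y HN HN' H) as [y' Hy'].
  exists y'. unfold invL. rewrite eN_cons, eN'_cons. exact Hy'.
Qed.
Lemma bwd L y' : invL L -> exists y, invL ((y, y') :: L).
Proof.
  intros H. destruct (ext_models K M HF N' N (eN' L) (eN L) (length L) y' HN' HN (agree_sym _ _ _ _ _ H)) as [y Hy].
  exists y. unfold invL. rewrite eN_cons, eN'_cons. apply agree_sym. exact Hy.
Qed.

Lemma invL_in L x x' y y' : invL L -> In (x, x') L -> In (y, y') L ->
  (rR N x y <-> rR N' x' y') /\ (rS N x y <-> rS N' x' y') /\ (x = y <-> x' = y').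
Proof.
  intros H Hx Hy. destruct (In_nth L _ (d, d') Hx) as [i [Hi Ei]]. destruct (In_nth L _ (d, d') Hy) as [j [Hj Ej]].
  pose proof (agree_atoms _ _ _ _ _ i j H Hi Hj) as A. unfold eN, eN' in A. rewrite Ei, Ej in A. exact A.
Qed.

Variable cN : N -> nat.
Hypothesis cNi : forall x y, cN x = cN y -> x = y.
Variable cN' : N' -> nat.
Hypothesis cNi' : forall x y, cN' x = cN' y -> x = y.

Definition pickN (k : nat) : N := match emi (exists x, cN x = k) with left h => proj1_sig (cid _ _ h) | right _ => d end.
Definition pickN' (k : nat) : N' := match emi (exists x, cN' x = k) with left h => proj1_sig (cid _ _ h) | right _ => d' end.
Lemma pickN_spec x : pickN (cN x) = x.
Proof. unfold pickN. destruct (emi _) as [h|h]. destruct (cid _ _ h); simpl; auto. exfalso; eauto. Qed.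
Lemma pickN'_spec x : pickN' (cN' x) = x.
Proof. unfold pickN'. destruct (emi _) as [h|h]. destruct (cid _ _ h); simpl; auto. exfalso; eauto. Qed.

Definition SL := {L | invL L}.
Definition stepL (s : SL) (k : nat) : SL :=
  let H1 := fwd (proj1_sig s) (pickN k) (proj2_sig s) in
  let y1 := proj1_sig (cid _ _ H1) in
  let H2 := bwd ((pickN k, y1) :: proj1_sig s) (pickN' k) (proj2_sig (cid _ _ H1)) in
  exist _ ((proj1_sig (cid _ _ H2), pickN' k) :: (pickN k, y1) :: proj1_sig s) (proj2_sig (cid _ _ H2)).

Lemma stepL_spec s k : exists y1 y2, proj1_sig (stepL s k) = (y2, pickN' k) :: (pickN k, y1) :: proj1_sig s.
Proof. unfold stepL. simpl. eauto. Qed.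

Lemma invL_nil : invL [].
Proof. intros a H. simpl in H. contradiction. Qed.
Definition L0 : SL := exist _ [] invL_nil.
Fixpoint Lst (k : nat) : SL := match k with 0 => L0 | S k => stepL (Lst k) k end.

Lemma Lst_mono k k' p : k <= k' -> In p (proj1_sig (Lst k)) -> In p (proj1_sig (Lst k')).
Proof.
  induction 1; auto. intros Hp. change (In p (proj1_sig (stepL (Lst m) m))).
  destruct (stepL_spec (Lst m) m) as (y1&y2&E). rewrite E. simpl; auto.
Qed.

Definition Rel x x' := exists k, In (x, x') (proj1_sig (Lst k)).
Lemma Rel_fwd x : exists x', Rel x x'.
Proof.
  destruct (stepL_spec (Lst (cN x)) (cN x)) as (y1&y2&E). exists y1, (S (cN x)).
  change (In (x, y1) (proj1_sig (stepL (Lst (cN x)) (cN x)))). rewrite E.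
  rewrite pickN_spec. simpl; auto.
Qed.
Lemma Rel_bwd x' : exists x, Rel x x'.
Proof.
  destruct (stepL_spec (Lst (cN' x')) (cN' x')) as (y1&y2&E). exists y2, (S (cN' x')).
  change (In (y2, x') (proj1_sig (stepL (Lst (cN' x')) (cN' x')))). rewrite E.
  rewrite pickN'_spec. simpl; auto.
Qed.
Lemma Rel_both x x' y y' : Rel x x' -> Rel y y' ->
  (rR N x y <-> rR N' x' y') /\ (rS N x y <-> rS N' x' y') /\ (x = y <-> x' = y').
Proof.
  intros [k Hk] [k' Hk']. apply (invL_in (proj1_sig (Lst (max k k')))).
  apply proj2_sig. apply (Lst_mono k); auto; lia. apply (Lst_mono k'); auto; lia.
Qed.

Lemma bf_iso : exists h : N -> N', iso h.
Proof.
  exists (fun x => proj1_sig (cid _ _ (Rel_fwd x))).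
  assert (R : forall x, Rel x (proj1_sig (cid _ _ (Rel_fwd x)))) by (intros x; destruct cid; auto).
  split; [split; [|split; [|split]]|].
  - intros x y E. apply (Rel_both _ _ _ _ (R x) (R y)). auto.
  - intros x y. apply (Rel_both _ _ _ _ (R x) (R y)).
  - intros x y. apply (Rel_both _ _ _ _ (R x) (R y)).
  - intros [].
  - intros x'. destruct (Rel_bwd x') as [x Hx]. exists x. apply (Rel_both _ _ _ _ (R x) Hx). auto.
Qed.
End BF.

Theorem omega_cat : omega_categorical (Th M).
Proof.
  intros N N' HN HN' [cN cNi] _ [cN' cNi'] _.
  destruct HN as [[d] HN0]. destruct HN' as [[d'] HN0'].
  apply (bf_iso N N' (conj (inhabits d) HN0) (conj (inhabits d') HN0') d d' cN cNi cN' cNi').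
Qed.

Hypothesis Kher : forall (D E : RSStr) (h : E -> D), K D -> emb h -> K E.
Hypothesis Kap : AP K.
Hypothesis Kax : forall N, model (ThK K) N -> K N.

Definition inclX {N : RSStr} (X : substr N) : induced X -> N := fun x => proj1_sig x.
Lemma inclX_emb {N : RSStr} (X : substr N) : emb (inclX X).
Proof.
  split; [|split; [|split]]. intros x y E; apply sig_eq; auto. intros; simpl; tauto. intros; simpl; tauto. intros [].
Qed.

Definition envX {N : RSStr} (e : nat -> N) (k : nat) (i : nat) : induced (subOf N e (S k)) :=
  match lt_dec i (S k) with
  | left h => exist _ (e i) (ex_intro _ i (conj h eq_refl))
  | right _ => exist _ (e 0) (ex_intro _ 0 (conj (Nat.lt_0_succ k) eq_refl)) end.
Lemma envX_agree {N : RSStr} (e : nat -> N) k i : i < S k -> inclX _ (envX e k i) = e i.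
Proof. intros H. unfold envX. destruct (lt_dec i (S k)); [reflexivity|contradiction]. Qed.

Lemma age_fg (X : substr M) : fin_gen X -> K (induced X).
Proof.
  intros fg. destruct HF as (_&_&AG). apply (proj2 (AG (induced X))).
  exists X. split; auto. exists (fun x => x). split; [apply emb_id|]. intros y; exists y; auto.
Qed.

Lemma univ_fwd p : sentence p -> universal p -> entails (ThK K) p -> entails (Th M) p.
Proof.
  intros Sp (k&psi&Q&->) H N [_ HN]. apply HN. split; auto.
  refine (clo_holds M k psi _). intros e.
  set (X := subOf M e (S k)).
  assert (KX : K (induced X)) by (apply age_fg, subOf_fg).
  assert (MX : model (ThK K) (induced X)).
  { split. constructor. exact (envX e k 0). intros q [_ Hq]. apply Hq; auto. constructor. exact (envX e k 0). }
  pose proof (clo_inst _ k psi (H _ MX) (envX e k)) as S1.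
  apply (qf_emb _ _ (inclX X) (inclX_emb X) psi Q) in S1.
  assert (B : bound k psi) by (apply (clo_bound_inv k psi 0); auto).
  apply (sat_ext' M psi (S k) (fun i => inclX X (envX e k i)) e); [eapply bound_mono; [exact B|lia]| |exact S1].
  intros i Hi. apply envX_agree; auto.
Qed.

Lemma univ_bwd p : sentence p -> universal p -> entails (Th M) p -> entails (ThK K) p.
Proof.
  intros Sp (k&psi&Q&->) H N HN. pose proof (Kax N HN) as KN.
  refine (clo_holds N k psi _). intros e.
  set (X := subOf N e (S k)).
  assert (KX : K (induced X)) by exact (Kher _ _ (inclX X) KN (inclX_emb X)).
  assert (FX : finite_type (induced X)).
  { apply (finite_inj (inclX X) (map e (seq 0 (S k)))).
    - intros [x (i&Hi&<-)]. change (In (e i) (map e (seq 0 (S k)))). apply in_map. apply in_seq. lia.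
    - intros x y E. apply sig_eq; auto. }
  destruct HF as (_&_&AG). destruct (proj1 (AG (induced X)) (conj KX FX)) as (Y&_&g&isog).
  set (gm := fun x => inclX Y (g x)).
  assert (eg : emb gm) by exact (emb_comp g (inclX Y) (proj1 isog) (inclX_emb Y)).
  assert (MM : model (Th M) M) by (split; [constructor; exact (gm (envX e k 0))|intros q [_ Hq]; exact Hq]).
  pose proof (clo_inst _ k psi (H _ MM) (fun i => gm (envX e k i))) as S1.
  apply (qf_emb _ _ gm eg psi Q) in S1.
  apply (qf_emb _ _ (inclX X) (inclX_emb X) psi Q) in S1.
  assert (B : bound k psi) by (apply (clo_bound_inv k psi 0); auto).
  apply (sat_ext' N psi (S k) (fun i => inclX X (envX e k i)) e); [eapply bound_mono; [exact B|lia]| |exact S1].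
  intros i Hi. apply envX_agree; auto.
Qed.

Lemma AP_ThK : AP (model (ThK K)).
Proof.
  intros A B C f g MA MB MC ef eg.
  destruct (Kap A B C f g (Kax A MA) (Kax B MB) (Kax C MC) ef eg) as (D&i&j&KD&ei&ej&c).
  exists D, i, j. split; auto.
  destruct MA as [[a] _]. split. constructor; exact (i a). intros q [_ Hq]. apply Hq; auto.
Qed.

Theorem MCompl : model_completion (Th M) (ThK K).
Proof.
  split; [apply (MC_Th K M HF)|split; [|apply AP_ThK]].
  intros p Sp Up. split; [apply univ_fwd; auto|apply univ_bwd; auto].
Qed.

End Logic2.

End XLg3.
Import XLg3.


Lemma hp_emb {T U} (r : T -> T -> Prop) (r' : U -> U -> Prop) (h : T -> U) :
  (forall x y, h x = h y -> x = y) -> (forall x y, r x y <-> r' (h x) (h y)) ->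
  forall p, has_prop p r' -> has_prop p r.
Proof.
  intros hi hr p; destruct p; simpl; intros H.
  - intros x y z a b. apply hr. apply hr in a, b. eauto.
  - intros x. apply hr. auto.
  - intros x y a. apply hr. apply hr in a. auto.
  - intros x a. apply hr in a. eapply H; eauto.
  - intros x y a b. apply hi. apply hr in a, b. auto.
Qed.

Lemma Kher_KG {I} P Q (kd : I -> okind) (D E : Str I) (h : E -> D) : KG P Q kd D -> emb h -> KG P Q kd E.
Proof.
  intros ((HP&HQ&Hin)&Ho) (hi&hR&hS&hop). split; [split; [|split]|].
  - intros p Pp. apply (hp_emb _ _ h hi hR). auto.
  - intros p Pp. apply (hp_emb _ _ h hi hS). auto.
  - intros x y H. apply hS, Hin, hR, H.
  - intros i. destruct (Ho i) as [o1 o2]. destruct (kd i); simpl in *; split; auto;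
    intros x y H; first [apply hR | apply hS]; rewrite !hop; first [apply o1 | apply o2]; first [apply hR | apply hS]; auto.
Qed.

Lemma Kempty_KG {I} P Q (kd : I -> okind) (E : Str I) : (E -> False) -> KG P Q kd E.
Proof.
  intros H. split; [split; [|split]|].
  - intros p _. destruct p; simpl; intros; exfalso; eauto.
  - intros p _. destruct p; simpl; intros; exfalso; eauto.
  - intros x; exfalso; eauto.
  - intros i. destruct (kd i); simpl; split; auto; intros x; exfalso; eauto.
Qed.

Lemma SAP_AP {I} (K : Str I -> Prop) : SAP K -> AP K.
Proof.
  intros H A B C f g KA KB KC ef eg. destruct (H A B C f g) as (D&i&j&a&b&c&d&_); auto.
  exists D, i, j; auto.
Qed.

Lemma AP_KG {I} P Q (kd : I -> okind) : AP (KG P Q kd).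
Proof. apply SAP_AP, superSAP_SAP, superSAP_KG. Qed.

Definition axf (p : rprop) (atf : nat -> nat -> fm) : fm :=
  match p with
  | Trans => fAll (fAll (fAll (fImp (atf 2 1) (fImp (atf 1 0) (atf 2 0)))))
  | Refl => fAll (atf 0 0)
  | Symm => fAll (fAll (fImp (atf 1 0) (atf 0 1)))
  | Irrefl => fAll (fImp (atf 0 0) fBot)
  | Antisym => fAll (fAll (fImp (atf 1 0) (fImp (atf 0 1) (fEq 1 0))))
  end.
Definition axInc := fAll (fAll (fImp (fR 1 0) (fS 1 0))).

Lemma axf_R (N : RSStr) e p : sat N e (axf p fR) <-> has_prop p (rR N).
Proof. destruct p; simpl; tauto. Qed.
Lemma axf_S (N : RSStr) e p : sat N e (axf p fS) <-> has_prop p (rS N).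
Proof. destruct p; simpl; tauto. Qed.
Lemma axf_sentR p : sentence (axf p fR).
Proof. unfold sentence; destruct p; simpl; repeat split; lia. Qed.
Lemma axf_sentS p : sentence (axf p fS).
Proof. unfold sentence; destruct p; simpl; repeat split; lia. Qed.

Lemma Kax_KPQ P Q N : model (ThK (KPQ P Q)) N -> KPQ P Q N.
Proof.
  intros [[d] HN]. set (e := fun _ : nat => d).
  split; [|split].
  - intros p Pp. apply (axf_R N e p). apply HN. split. apply axf_sentR.
    intros N' [HP _] _ e'. apply axf_R. auto.
  - intros p Pp. apply (axf_S N e p). apply HN. split. apply axf_sentS.
    intros N' [_ [HQ _]] _ e'. apply axf_S. auto.
  - assert (T : ThK (KPQ P Q) axInc).
    { split. unfold sentence; simpl; lia. intros N' [_ [_ Hi]] _ e'. simpl. auto. }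
    intros x y. exact (HN _ T e x y).
Qed.

Lemma partA P Q : SAP (KPQ P Q) /\ superSAP_RS (KPQ P Q) /\
     exists M : RSStr,
       Fraisse_limit (finite_mem (KPQ P Q)) M /\
       omega_categorical (Th M) /\ QE (Th M) /\
       model_completion (Th M) (ThK (KPQ P Q)).
Proof.
  assert (SS : superSAP_RS (KPQ P Q)).
  { apply (superSAP_ext (KG P Q kd0)). intros N; rewrite KPQ_KG; tauto. apply superSAP_KG. }
  assert (Kher : forall (D E : RSStr) (h : E -> D), KPQ P Q D -> emb h -> KPQ P Q E).
  { intros D E h H1 H2. apply KPQ_KG. apply KPQ_KG in H1. eapply Kher_KG; eauto. }
  assert (Kap : AP (KPQ P Q)) by (apply SAP_AP, superSAP_SAP; auto).
  assert (Kempty : forall E : RSStr, (E -> False) -> KPQ P Q E).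
  { intros E H. apply KPQ_KG. apply Kempty_KG; auto. }
  split; [apply superSAP_SAP; auto|split; auto].
  destruct (Fraisse_exists Empty_set [] (fun i => match i with end) (KPQ P Q) Kher Kap Kempty) as [M HF].
  exists M. split; auto. split; [apply (omega_cat _ M HF)|split; [apply (QE_Th _ M HF)|]].
  apply (MCompl _ M HF Kher Kap (Kax_KPQ P Q)).
Qed.

Lemma partB P Q (I1 I2 I3 I4 : Type) :
  superSAP_RS (KPQ_ops P Q I1 I2 I3 I4) /\
     (finite_type I1 -> finite_type I2 -> finite_type I3 -> finite_type I4 ->
      exists M, Fraisse_limit (finite_mem (KPQ_ops P Q I1 I2 I3 I4)) M).
Proof.
  set (K := KPQ_ops P Q I1 I2 I3 I4).
  assert (E : forall N, KG P Q kd4 N <-> K N) by (intros N; unfold K; rewrite KPQ_ops_KG; tauto).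
  split.
  - apply (superSAP_ext (KG P Q kd4)); auto. apply superSAP_KG.
  - intros [l1 H1] [l2 H2] [l3 H3] [l4 H4].
    set (lI := map (fun x => inl (inl (inl x))) l1 ++ map (fun x => inl (inl (inr x))) l2 ++
               map (fun x => inl (inr x)) l3 ++ map (fun x => inr x) l4 : list (I1 + I2 + I3 + I4)).
    assert (HlI : forall i, In i lI).
    { intros [[[x|x]|x]|x]; unfold lI; rewrite !in_app_iff, !in_map_iff; eauto 10. }
    apply (Fraisse_exists _ lI HlI K).
    + intros D F h H1' H2'. apply E. apply E in H1'. eapply Kher_KG; eauto.
    + apply SAP_AP. apply superSAP_SAP. apply (superSAP_ext (KG P Q kd4)); auto. apply superSAP_KG.
    + intros F H. apply E. apply Kempty_KG; auto.
Qed.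

Theorem theorem3p1 :
  (* (A) *)
  (forall P Q : rprop -> Prop,
     SAP (KPQ P Q) /\ superSAP_RS (KPQ P Q) /\
     exists M : RSStr,
       Fraisse_limit (finite_mem (KPQ P Q)) M /\
       omega_categorical (Th M) /\ QE (Th M) /\
       model_completion (Th M) (ThK (KPQ P Q))) /\
  (* (B) *)
  (forall (P Q : rprop -> Prop) (I1 I2 I3 I4 : Type),
     superSAP_RS (KPQ_ops P Q I1 I2 I3 I4) /\
     (finite_type I1 -> finite_type I2 -> finite_type I3 -> finite_type I4 ->
      exists M, Fraisse_limit (finite_mem (KPQ_ops P Q I1 I2 I3 I4)) M)) /\
  (* (C) *)
  ~ AP KC /\
  (* (D) *)
  ~ AP KD.
Proof.
  split; [exact partA|split; [exact partB|split; [exact partC|exact partD]]].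
Qed.
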